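(* Consider the compound MAC model with arbitrarily correlated sources $(S_1,S_2)$ and receiver side information $(W_1,W_2)$. Source-channel rate $b$ is achievable if there exist a random variable $Q$ with $|\mathcal{Q}|\le4$ and an input distribution $p(q,x_1,x_2)=p(q)p(x_1|q)p(x_2|q)$ such that for $k=1,2$: $$H(S_1|S_2,W_k)<b\,I(X_1;Y_k|X_2,Q),\quad H(S_2|S_1,W_k)<b\,I(X_2;Y_k|X_1,Q),\quad H(S_1,S_2|W_k)<b\,I(X_1,X_2;Y_k|Q).$$
   Context: Compound MAC model: $\{(S_{1,k},S_{2,k},W_{1,k},W_{2,k})\}_{k\ge1}$ i.i.d. $\sim p(s_1,s_2,w_1,w_2)$ on finite alphabets. Transmitter $i\in\{1,2\}$ observes $S_i^m$ and sends $X_i^n=f_i^{(m,n)}(S_i^m)$. The channel $p(y_1,y_2|x_1,x_2)$ is discrete memoryless with finite alphabets. Receiver $k\in\{1,2\}$ observes $(Y_k^n,W_k^m)$ and outputs $(\hat S_{k,1}^m,\hat S_{k,2}^m)=g_k^{(m,n)}(Y_k^n,W_k^m)$, an estimate of both sources. Error probability $P_e^{(m,n)}=\Pr\{\bigcup_{k=1,2}\{(S_1^m,S_2^m)\neq(\hat S_{k,1}^m,\hat S_{k,2}^m)\}\}$. Rate $b$ is achievable if for every $\epsilon>0$ there exist positive integers $m,n$ with $n/m=b$ and encoders/decoders with $P_e^{(m,n)}<\epsilon$. *)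

(* Defs.v *)
From mathcomp Require Import all_boot.
From Stdlib Require Import Reals.
Set Implicit Arguments. Unset Strict Implicit. Unset Printing Implicit Defensive.

Open Scope R_scope.

Definition rsum (T : finType) (f : T -> R) : R :=
  List.fold_right Rplus 0 (List.map f (enum T)).
Definition rprod (T : finType) (f : T -> R) : R :=
  List.fold_right Rmult 1 (List.map f (enum T)).

Definition is_pmf (T : finType) (f : T -> R) : Prop :=
  (forall t, 0 <= f t) /\ rsum f = 1.

Definition marg (T U : finType) (p : T -> R) (g : T -> U) (u : U) : R :=
  rsum (fun t => if g t == u then p t else 0).

(* Terms with p(t) = 0 vanish. *)
Definition cond_entropy (T U V : finType) (p : T -> R) (A : T -> U) (B : T -> V) : R :=
  - rsum (fun t => p t * ln (marg p (fun s => (A s, B s)) (A t, B t)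
                              / marg p B (B t))).

Definition cond_mutinf (T U V Z : finType) (p : T -> R)
    (A : T -> U) (C : T -> Z) (B : T -> V) : R :=
  cond_entropy p C B - cond_entropy p C (fun t => (A t, B t)).

(* Source letter: ((s1, s2), w1), w2 *)
Definition src (S1 S2 W1 W2 : finType) : finType := (S1 * S2 * W1 * W2)%type.

Definition err_prob (S1 S2 W1 W2 X1 X2 Y1 Y2 : finType)
    (p : src S1 S2 W1 W2 -> R) (W : X1 -> X2 -> (Y1 * Y2)%type -> R)
    (m n : nat)
    (f1 : {ffun 'I_m -> S1} -> {ffun 'I_n -> X1})
    (f2 : {ffun 'I_m -> S2} -> {ffun 'I_n -> X2})
    (g1 : {ffun 'I_n -> Y1} -> {ffun 'I_m -> W1} ->
          ({ffun 'I_m -> S1} * {ffun 'I_m -> S2})%type)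
    (g2 : {ffun 'I_n -> Y2} -> {ffun 'I_m -> W2} ->
          ({ffun 'I_m -> S1} * {ffun 'I_m -> S2})%type) : R :=
  rsum (fun u : {ffun 'I_m -> src S1 S2 W1 W2} =>
    let s1 := [ffun i => (u i).1.1.1] in
    let s2 := [ffun i => (u i).1.1.2] in
    let w1 := [ffun i => (u i).1.2] in
    let w2 := [ffun i => (u i).2] in
    let x1 := f1 s1 in
    let x2 := f2 s2 in
    rprod (fun i => p (u i)) *
    rsum (fun y : {ffun 'I_n -> (Y1 * Y2)%type} =>
      let y1 := [ffun j => (y j).1] in
      let y2 := [ffun j => (y j).2] in
      rprod (fun j => W (x1 j) (x2 j) (y j)) *
      (if (g1 y1 w1 == (s1, s2)) && (g2 y2 w2 == (s1, s2)) then 0 else 1))).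

Definition achievable (S1 S2 W1 W2 X1 X2 Y1 Y2 : finType)
    (p : src S1 S2 W1 W2 -> R) (W : X1 -> X2 -> (Y1 * Y2)%type -> R) (b : R) : Prop :=
  forall eps, 0 < eps ->
  exists (m n : nat), (0 < m)%nat /\ (0 < n)%nat /\ INR n / INR m = b /\
  exists f1 f2 g1 g2, @err_prob S1 S2 W1 W2 X1 X2 Y1 Y2 p W m n f1 f2 g1 g2 < eps.

Definition in_joint (Q X1 X2 Y1 Y2 : finType) (pq : Q -> R)
    (px1 : Q -> X1 -> R) (px2 : Q -> X2 -> R) (W : X1 -> X2 -> (Y1 * Y2)%type -> R)
    (t : (Q * X1 * X2 * (Y1 * Y2))%type) : R :=
  let: (q, x1, x2, y) := t in pq q * px1 q x1 * px2 q x2 * W x1 x2 y.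

(* Main.v *)
From HB Require Import structures.
Require Import Defs.
From mathcomp Require Import all_boot.
From Stdlib Require Import Reals Lra Classical Lia.
Set Implicit Arguments. Unset Strict Implicit. Unset Printing Implicit Defensive.
Open Scope R_scope.

Lemma Rplus_0l' : left_id 0 Rplus. Proof. move=> x; lra. Qed.
Lemma Rmult_1l' : left_id 1 Rmult. Proof. move=> x; lra. Qed.
Lemma RplusA' : associative Rplus. Proof. move=> x y z; lra. Qed.
Lemma RplusC' : commutative Rplus. Proof. move=> x y; lra. Qed.
Lemma RmultA' : associative Rmult. Proof. move=> x y z; ring. Qed.
Lemma RmultC' : commutative Rmult. Proof. move=> x y; ring. Qed.
Lemma Rmul0l' : left_zero 0 Rmult. Proof. move=> x; ring. Qed.
Lemma Rmul0r' : right_zero 0 Rmult. Proof. move=> x; ring. Qed.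
Lemma RmulDl' : left_distributive Rmult Rplus. Proof. move=> x y z; ring. Qed.
Lemma RmulDr' : right_distributive Rmult Rplus. Proof. move=> x y z; ring. Qed.
HB.instance Definition _ := Monoid.isComLaw.Build R 0 Rplus RplusA' RplusC' Rplus_0l'.
HB.instance Definition _ := Monoid.isComLaw.Build R 1 Rmult RmultA' RmultC' Rmult_1l'.
HB.instance Definition _ := Monoid.isMulLaw.Build R 0 Rmult Rmul0l' Rmul0r'.
HB.instance Definition _ := Monoid.isAddLaw.Build R Rmult Rplus RmulDl' RmulDr'.

Lemma rsumE (T : finType) (f : T -> R) : rsum f = \big[Rplus/0]_(t : T) f t.
Proof.
rewrite /rsum -big_enum /= unlock /reducebig.
elim: (enum T) => //= a l ->. done.
Qed.
Lemma rprodE (T : finType) (f : T -> R) : rprod f = \big[Rmult/1]_(t : T) f t.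
Proof.
rewrite /rprod -big_enum /= unlock /reducebig.
elim: (enum T) => //= a l ->. done.
Qed.

Notation "\sumR_ ( i : t ) F" := (\big[Rplus/0]_(i : t) F) (at level 41, F at level 41, i at level 50).
Notation "\sumR_ ( i | P ) F" := (\big[Rplus/0]_(i | P) F) (at level 41, F at level 41, i at level 50).
Notation "\prodR_ ( i : t ) F" := (\big[Rmult/1]_(i : t) F) (at level 36, F at level 36, i at level 50).
Notation "\prodR_ ( i | P ) F" := (\big[Rmult/1]_(i | P) F) (at level 36, F at level 36, i at level 50).

Section BigR.
Variable T : finType.

Lemma sumR_le (P : pred T) (F G : T -> R) :
  (forall i, P i -> F i <= G i) -> \sumR_(i | P i) F i <= \sumR_(i | P i) G i.
Proof. move=> h; apply: (big_ind2 (fun x y => x <= y)) => //; [lra | move=> *; lra]. Qed.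

Lemma sumR_ge0 (P : pred T) (F : T -> R) :
  (forall i, P i -> 0 <= F i) -> 0 <= \sumR_(i | P i) F i.
Proof. move=> h; apply: (big_ind (fun x => 0 <= x)) => //; [lra | move=> *; lra]. Qed.

Lemma prodR_ge0 (P : pred T) (F : T -> R) :
  (forall i, P i -> 0 <= F i) -> 0 <= \prodR_(i | P i) F i.
Proof. move=> h; apply: (big_ind (fun x => 0 <= x)) => //; [lra | move=> *; nra]. Qed.

Lemma prodR_gt0 (P : pred T) (F : T -> R) :
  (forall i, P i -> 0 < F i) -> 0 < \prodR_(i | P i) F i.
Proof. move=> h; apply: (big_ind (fun x => 0 < x)) => //; [lra | move=> *; nra]. Qed.

Lemma prodR_le1 (P : pred T) (F : T -> R) :
  (forall i, P i -> 0 <= F i <= 1) -> \prodR_(i | P i) F i <= 1.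
Proof.
move=> h; suff: 0 <= \prodR_(i | P i) F i <= 1 by lra.
apply: (big_ind (fun x => 0 <= x <= 1)) => //; [lra | move=> *; nra].
Qed.

Lemma sumR_ind (x : T) (G : T -> R) :
  \sumR_(c : T) (if x == c then G c else 0) = G x.
Proof.
rewrite (bigD1 x) //= eqxx big1 ?Rplus_0_r // => i /negbTE.
by rewrite eq_sym => ->.
Qed.

Lemma sumR_ind' (x : T) (G : T -> R) :
  \sumR_(c : T) (if c == x then G c else 0) = G x.
Proof. rewrite -(sumR_ind x); apply: eq_bigr => c _; by rewrite eq_sym. Qed.

Lemma sumR_exists (w F : T -> R) eps :
  (forall t, 0 <= w t) -> \sumR_(t : T) w t = 1 ->
  \sumR_(t : T) w t * F t < eps -> exists t, F t < eps.
Proof.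
move=> w0 w1 h; apply: NNPP => hn.
have : \sumR_(t : T) w t * eps <= \sumR_(t : T) w t * F t.
  apply: sumR_le => t _; apply: Rmult_le_compat_l => //.
  apply: Rnot_lt_le => ht; apply: hn; by exists t.
by rewrite -big_distrl /= w1; lra.
Qed.

End BigR.

Section FFun.
Variables (I T : finType).

Lemma sum_ffun_prod (f : I -> T -> R) :
  \sumR_(g : {ffun I -> T}) \prodR_(i : I) f i (g i) = \prodR_(i : I) \sumR_(t : T) f i t.
Proof. by rewrite bigA_distr_bigA. Qed.

Lemma sum_ffun_prod2 (mu h : I -> T -> R) :
  \sumR_(g : {ffun I -> T}) (\prodR_(i : I) mu i (g i)) * \prodR_(i : I) h i (g i)
  = \prodR_(i : I) \sumR_(t : T) mu i t * h i t.
Proof.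
rewrite -sum_ffun_prod; apply: eq_bigr => g _; by rewrite -big_split.
Qed.

Variable mu : I -> T -> R.
Hypothesis mu1 : forall i, \sumR_(t : T) mu i t = 1.

Lemma sum_ffun_pmf : \sumR_(g : {ffun I -> T}) \prodR_(i : I) mu i (g i) = 1.
Proof. rewrite sum_ffun_prod big1 // => i _; exact: mu1. Qed.

Lemma marg1 (i0 : I) (F : T -> R) :
  \sumR_(g : {ffun I -> T}) (\prodR_(i : I) mu i (g i)) * F (g i0)
  = \sumR_(t : T) mu i0 t * F t.
Proof.
transitivity (\sumR_(g : {ffun I -> T}) (\prodR_(i : I) mu i (g i)) *
   \prodR_(i : I) (if i == i0 then F (g i) else 1)).
  apply: eq_bigr => g _; congr (_ * _).
  rewrite (bigD1 i0) //= eqxx big1 ?Rmult_1_r // => i /negbTE -> //.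
rewrite (sum_ffun_prod2 mu (fun i t => if i == i0 then F t else 1)) (bigD1 i0) //= [X in _ * X]big1 ?Rmult_1_r.
  by apply: eq_bigr => t _; rewrite eqxx.
move=> i /negbTE ->; under eq_bigr do rewrite Rmult_1_r; exact: mu1.
Qed.

Lemma marg2 (i0 i1 : I) (F : T -> T -> R) : i0 != i1 ->
  \sumR_(g : {ffun I -> T}) (\prodR_(i : I) mu i (g i)) * F (g i0) (g i1)
  = \sumR_(t : T) \sumR_(t' : T) mu i0 t * mu i1 t' * F t t'.
Proof.
move=> ne.
transitivity (\sumR_(g : {ffun I -> T}) \sumR_(t : T) \sumR_(t' : T)
   (\prodR_(i : I) mu i (g i)) * \prodR_(i : I)
     (if i == i0 then (if g i == t then 1 else 0) else
      if i == i1 then (if g i == t' then F t t' else 0) else 1)).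
  apply: eq_bigr => g _; symmetry.
  transitivity (\sumR_(t : T) (if g i0 == t then \sumR_(t' : T)
     (if g i1 == t' then (\prodR_(i : I) mu i (g i)) * F t t' else 0) else 0)).
    apply: eq_bigr => t _.
    case: (boolP (g i0 == t)) => h0.
      apply: eq_bigr => t' _.
      rewrite [X in _ * X](bigD1 i0) //= [X in _ * (_ * X)](bigD1 i1) /=; last by rewrite eq_sym.
      rewrite eqxx h0 ifF; last by apply/negbTE; rewrite eq_sym.
      rewrite eqxx [X in _ * (_ * (_ * X))]big1; last first.
        by move=> i /andP [/negbTE -> /negbTE ->].
      case: (g i1 == t'); ring.
    rewrite big1 // => t' _.
    rewrite [X in _ * X](bigD1 i0) //= eqxx (negbTE h0); ring.
  rewrite (sumR_ind (g i0)) (sumR_ind (g i1)) //.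
rewrite (exchange_big) /=; apply: eq_bigr => t _.
rewrite (exchange_big) /=; apply: eq_bigr => t' _.
rewrite (sum_ffun_prod2 mu (fun i c => if i == i0 then (if c == t then 1 else 0) else
      if i == i1 then (if c == t' then F t t' else 0) else 1)) (bigD1 i0) //= (bigD1 i1) /=; last by rewrite eq_sym.
rewrite [X in _ * (_ * X)]big1 ?Rmult_1_r.
  have e10 : (i1 == i0) = false by apply/negbTE; rewrite eq_sym.
  rewrite !eqxx e10.
  transitivity ((\sumR_(c : T) (if c == t then mu i0 c else 0)) *
     \sumR_(c : T) (if c == t' then mu i1 c * F t t' else 0)).
    congr (_ * _); apply: eq_bigr => c _; case: (c == _); ring.
  rewrite (sumR_ind' t (fun c => mu i0 c)) (sumR_ind' t' (fun c => mu i1 c * F t t')); ring.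
move=> i /andP [/negbTE -> /negbTE ->]; under eq_bigr do rewrite Rmult_1_r; exact: mu1.
Qed.

End FFun.

Lemma sum_zip (I A B : finType) (F : {ffun I -> A} -> {ffun I -> B} -> R) :
  \sumR_(a : {ffun I -> A}) \sumR_(b : {ffun I -> B}) F a b =
  \sumR_(z : {ffun I -> A * B}) F [ffun i => (z i).1] [ffun i => (z i).2].
Proof.
rewrite pair_bigA /=.
rewrite (reindex (fun z : {ffun I -> A * B} => ([ffun i => (z i).1], [ffun i => (z i).2]))) //=.
apply: onW_bij; exists (fun pr : {ffun I -> A} * {ffun I -> B} => [ffun i => (pr.1 i, pr.2 i)]).
  by move=> z; apply/ffunP => i; rewrite !ffunE; case: (z i).
by case=> a b /=; congr (_, _); apply/ffunP => i; rewrite !ffunE.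
Qed.

Definition rltb (x y : R) : bool := if Rlt_dec x y then true else false.
Definition ind (b : bool) : R := if b then 1 else 0.

Lemma ind_ge0 b : 0 <= ind b. Proof. case: b => /=; lra. Qed.
Lemma ind_le1 b : ind b <= 1. Proof. case: b => /=; lra. Qed.

Lemma ind_markov g X : 0 <= X -> ind (rltb (exp g) X) <= X * exp (- g).
Proof.
move=> hX; rewrite /ind /rltb; case: Rlt_dec => h.
  rewrite exp_Ropp; have := exp_pos g => hg.
  apply: (Rmult_le_reg_r (exp g)) => //; rewrite Rmult_assoc Rinv_l; lra.
apply: Rmult_le_pos => //; apply: Rlt_le; exact: exp_pos.
Qed.

Lemma inv_ge0 x : 0 <= x -> / x >= 0.
Proof.
move=> h; case: (Req_dec x 0) => [->|hx]; first by rewrite Rinv_0; lra.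
apply: Rle_ge; apply: Rlt_le; apply: Rinv_0_lt_compat; lra.
Qed.

Lemma ln_prodR (T : finType) (F : T -> R) :
  (forall i, 0 < F i) -> ln (\prodR_(i : T) F i) = \sumR_(i : T) ln (F i).
Proof.
move=> h.
suff: 0 < \prodR_(i : T) F i /\ ln (\prodR_(i : T) F i) = \sumR_(i : T) ln (F i) by case.
apply: (big_ind2 (fun x y => 0 < x /\ ln x = y)).
- split; [lra | exact: ln_1].
- move=> x1 x2 y1 y2 [h1 e1] [h2 e2]; split; first nra.
  by rewrite ln_mult // e1 e2.
- move=> i _; split; [exact: h | done].
Qed.

Lemma sumR_const (I : finType) (c : R) : \sumR_(i : I) c = INR #|I| * c.
Proof.
rewrite big_const; elim: #|I| => [|k ih]; first (simpl; ring).
rewrite iterS ih S_INR; ring.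
Qed.

Lemma prodR_zero (I : finType) (F : I -> R) i : F i = 0 -> \prodR_(j : I) F j = 0.
Proof. move=> h; rewrite (bigD1 i) //= h; ring. Qed.

Section Marg.
Variables (T : finType) (p : T -> R).
Hypothesis p0 : forall t, 0 <= p t.

Lemma margE (U : finType) (g : T -> U) u :
  marg p g u = \sumR_(t : T) (if g t == u then p t else 0).
Proof. by rewrite /marg rsumE. Qed.

Lemma marg_ge0 (U : finType) (g : T -> U) u : 0 <= marg p g u.
Proof. rewrite margE; apply: sumR_ge0 => t _; case: eqP => _; [exact: p0 | lra]. Qed.

Lemma marg_ge (U : finType) (g : T -> U) t : p t <= marg p g (g t).
Proof.
rewrite margE (bigD1 t) //= eqxx.
have : 0 <= \sumR_(i | i != t) (if g i == g t then p i else 0).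
  apply: sumR_ge0 => i _; case: eqP => _; [exact: p0 | lra].
lra.
Qed.

Lemma marg_sum_fst (A C : finType) (fA : T -> A) (fC : T -> C) c :
  \sumR_(a : A) marg p (fun t => (fA t, fC t)) (a, c) = marg p fC c.
Proof.
under eq_bigr do rewrite margE.
rewrite exchange_big margE; apply: eq_bigr => t _ /=.
case: (boolP (fC t == c)) => hc.
  rewrite -[RHS](sumR_ind (fA t) (fun _ => p t)); apply: eq_bigr => a _.
  by rewrite xpair_eqE hc andbT.
by rewrite big1 // => a _; rewrite xpair_eqE (negbTE hc) andbF.
Qed.

Lemma marg_sum_mid (Y A C : finType) (fY : T -> Y) (fA : T -> A) (fC : T -> C) y c :
  \sumR_(a : A) marg p (fun t => (fY t, (fA t, fC t))) (y, (a, c)) =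
  marg p (fun t => (fY t, fC t)) (y, c).
Proof.
under eq_bigr do rewrite margE.
rewrite exchange_big margE; apply: eq_bigr => t _ /=.
case: (boolP ((fY t, fC t) == (y, c))) => hc.
  rewrite -[RHS](sumR_ind (fA t) (fun _ => p t)); apply: eq_bigr => a _.
  move: hc; rewrite !xpair_eqE => /andP [-> ->]; by rewrite andbT.
rewrite big1 // => a _; move: hc; rewrite !xpair_eqE.
by case: (fY t == y); case: (fC t == c); rewrite //= andbF.
Qed.

Definition rho (A B : finType) (fA : T -> A) (fB : T -> B) (a : A) (b : B) : R :=
  marg p (fun t => (fA t, fB t)) (a, b) / marg p fB b.

Lemma rho_ge0 (A B : finType) (fA : T -> A) (fB : T -> B) a b : 0 <= rho fA fB a b.
Proof.
rewrite /rho /Rdiv; apply: Rmult_le_pos; first exact: marg_ge0.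
apply: Rge_le; apply: inv_ge0; exact: marg_ge0.
Qed.

Lemma rho_gt0 (A B : finType) (fA : T -> A) (fB : T -> B) t :
  0 < p t -> 0 < rho fA fB (fA t) (fB t).
Proof.
move=> h; rewrite /rho /Rdiv.
have h1 := marg_ge (fun t => (fA t, fB t)) t.
have h2 := marg_ge fB t.
apply: Rmult_lt_0_compat; first lra.
apply: Rinv_0_lt_compat; lra.
Qed.

Lemma rho_sum_le1 (A B : finType) (fA : T -> A) (fB : T -> B) b :
  \sumR_(a : A) rho fA fB a b <= 1.
Proof.
rewrite /rho /Rdiv -big_distrl /= marg_sum_fst.
case: (Req_dec (marg p fB b) 0) => [->|h]; first by rewrite Rinv_0; lra.
rewrite Rinv_r //; lra.
Qed.

End Marg.

Section Kap.
Variables (L : finType) (P : L -> R).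
Hypothesis P0 : forall t, 0 <= P t.
Variables (TA TB TY : finType) (fA : L -> TA) (fB : L -> TB) (fY : L -> TY).

Definition kap (a : TA) (b : TB) (y : TY) : R :=
  rho P fY (fun t => (fA t, fB t)) y (a, b) / rho P fY fB y b.

Lemma kap_sum_le1 (mu : TA -> R) b y :
  (forall a, 0 <= mu a) ->
  (forall a, marg P (fun t => (fA t, fB t)) (a, b) = mu a * marg P fB b) ->
  \sumR_(a : TA) mu a * kap a b y <= 1.
Proof.
move=> mu0 hind.
rewrite /kap /rho.
have hD := marg_ge0 P0 (fun t => (fY t, fB t)) (y, b).
have hMB := marg_ge0 P0 fB b.
set D := marg P (fun t => (fY t, fB t)) (y, b) in hD *.
set MB := marg P fB b in hMB *.
case: (Req_dec D 0) => [D0|Dn0].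
  rewrite big1; [lra | move=> a _; rewrite D0 /Rdiv Rmult_0_l Rinv_0; ring].
case: (Req_dec MB 0) => [M0|Mn0].
  rewrite big1; [lra | move=> a _; rewrite M0 /Rdiv Rinv_0 Rmult_0_r Rinv_0; ring].
apply: (Rle_trans _ (\sumR_(a : TA) marg P (fun t => (fY t, (fA t, fB t))) (y, (a, b)) / D)).
  apply: sumR_le => a _; rewrite hind -/MB.
  case: (Req_dec (mu a) 0) => [->|mn0].
    rewrite Rmult_0_l; apply: Rmult_le_pos; first exact: marg_ge0.
    apply: Rlt_le; apply: Rinv_0_lt_compat; lra.
  set N := marg _ _ _; apply: Req_le; field; repeat split => //.
rewrite /Rdiv -big_distrl /= (marg_sum_mid P fY fA fB) -/D Rinv_r //; lra.
Qed.

Lemma kap_gt0 t : 0 < P t -> 0 < kap (fA t) (fB t) (fY t).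
Proof.
move=> h; rewrite /kap /Rdiv; apply: Rmult_lt_0_compat.
  exact: (rho_gt0 P0 fY (fun t => (fA t, fB t)) h).
apply: Rinv_0_lt_compat; exact: (rho_gt0 P0 fY fB h).
Qed.

Lemma ln_kap t : 0 < P t -> ln (kap (fA t) (fB t) (fY t)) =
  ln (rho P fY (fun t => (fA t, fB t)) (fY t) (fA t, fB t)) - ln (rho P fY fB (fY t) (fB t)).
Proof.
move=> h; rewrite /kap /Rdiv ln_mult.
- rewrite ln_Rinv; [ring | exact: (rho_gt0 P0 fY fB h)].
- exact: (rho_gt0 P0 fY (fun t => (fA t, fB t)) h).
- apply: Rinv_0_lt_compat; exact: (rho_gt0 P0 fY fB h).
Qed.

Lemma kap_ge0 a b y : 0 <= kap a b y.
Proof.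
rewrite /kap /Rdiv; apply: Rmult_le_pos; first exact: rho_ge0.
apply: Rge_le; apply: inv_ge0; exact: rho_ge0.
Qed.

End Kap.

Lemma sumR_sub (I : finType) (F : I -> R) c :
  \sumR_(i : I) (F i - c) = \sumR_(i : I) F i - INR #|I| * c.
Proof.
rewrite /Rminus big_split /= -sumR_const.
congr (_ + _); rewrite (big_endo Ropp) //; [move=> x y; ring | ring].
Qed.

Lemma mean_zero (T : finType) (p f : T -> R) : \sumR_(t : T) p t = 1 ->
  \sumR_(t : T) p t * (f t - \sumR_(t : T) p t * f t) = 0.
Proof.
move=> p1; set c := \sumR_(t : T) p t * f t.
transitivity (c + (\sumR_(t : T) p t) * (- c)).
  rewrite big_distrl -big_split /=; apply: eq_bigr => t _; ring.
rewrite p1; ring.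
Qed.

Section Var.
Variables (I T : finType) (p : T -> R).
Hypothesis p1 : \sumR_(t : T) p t = 1.

Lemma var_iid (f : T -> R) : \sumR_(t : T) p t * f t = 0 ->
  \sumR_(u : {ffun I -> T}) (\prodR_(i : I) p (u i)) * ((\sumR_(i : I) f (u i)) * (\sumR_(i : I) f (u i)))
  = INR #|I| * \sumR_(t : T) p t * (f t * f t).
Proof.
move=> hm.
have mu1 : forall i : I, \sumR_(t : T) (fun _ => p) i t = 1 by move=> i; exact: p1.
transitivity (\sumR_(u : {ffun I -> T}) \sumR_(i : I) \sumR_(j : I)
   (\prodR_(i : I) p (u i)) * (f (u i) * f (u j))).
  apply: eq_bigr => u _; rewrite big_distrl big_distrr /=; apply: eq_bigr => i _.
  rewrite big_distrr big_distrr /=; apply: eq_bigr => j _; done.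
rewrite exchange_big -sumR_const; apply: eq_bigr => i _.
rewrite exchange_big (bigD1 i) //=.
have e1 : \sumR_(u : {ffun I -> T}) (\prodR_(i0 : I) p (u i0)) * (f (u i) * f (u i))
   = \sumR_(t : T) p t * (f t * f t).
  exact: (marg1 (mu := fun _ => p) mu1 i (fun t => f t * f t)).
rewrite e1 [X in _ + X]big1 ?Rplus_0_r // => j hj.
have ne : i != j by rewrite eq_sym.
rewrite (marg2 mu1 (fun t t' => f t * f t') ne) /=.
transitivity (\sumR_(t : T) p t * f t * \sumR_(t' : T) p t' * f t').
  apply: eq_bigr => t _; rewrite big_distrr /=; apply: eq_bigr => t' _; ring.
by rewrite -big_distrl /= hm; ring.
Qed.
End Var.

Section Tail.
Variables (T L : finType) (p : T -> R) (P : L -> R).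
Hypotheses (p0 : forall t, 0 <= p t) (p1 : \sumR_(t : T) p t = 1).
Hypotheses (P0 : forall t, 0 <= P t) (P1 : \sumR_(t : L) P t = 1).
Variables (rr : T -> R) (kk : L -> R).
Hypotheses (rr_pos : forall t, 0 < p t -> 0 < rr t) (kk_pos : forall t, 0 < P t -> 0 < kk t).

Definition EZ := \sumR_(t : T) p t * ln (rr t).
Definition EV := \sumR_(t : L) P t * ln (kk t).
Definition VZ := \sumR_(t : T) p t * ((ln (rr t) - EZ) * (ln (rr t) - EZ)).
Definition VV := \sumR_(t : L) P t * ((ln (kk t) - EV) * (ln (kk t) - EV)).

Lemma prod_pos_or_zero (I U : finType) (q : U -> R) (q0 : forall t, 0 <= q t) (u : {ffun I -> U}) :
  (forall i, 0 < q (u i)) \/ \prodR_(i : I) q (u i) = 0.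
Proof.
case: (classic (forall i, 0 < q (u i))) => h; [by left | right].
have [i hi] := not_all_ex_not _ _ h.
apply: (prodR_zero (i := i)); have := q0 (u i); lra.
Qed.

Lemma tail_bound (m n : nat) g :
  let M := INR m * EZ + INR n * EV in
  g < M ->
  \sumR_(u : {ffun 'I_m -> T}) \sumR_(l : {ffun 'I_n -> L})
     (\prodR_(i : 'I_m) p (u i)) * (\prodR_(j : 'I_n) P (l j)) *
     ind (~~ rltb (exp g) ((\prodR_(i : 'I_m) rr (u i)) * \prodR_(j : 'I_n) kk (l j)))
  <= 2 * (INR m * VZ + INR n * VV) / ((M - g) * (M - g)).
Proof.
move=> M hg.
set D := M - g.
have hD : 0 < D by rewrite /D; lra.
pose A (u : {ffun 'I_m -> T}) := \sumR_(i : 'I_m) (ln (rr (u i)) - EZ).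
pose B (l : {ffun 'I_n -> L}) := \sumR_(j : 'I_n) (ln (kk (l j)) - EV).
have hpt : forall (u : {ffun 'I_m -> T}) (l : {ffun 'I_n -> L}), (\prodR_(i : 'I_m) p (u i)) * (\prodR_(j : 'I_n) P (l j)) *
     ind (~~ rltb (exp g) ((\prodR_(i : 'I_m) rr (u i)) * \prodR_(j : 'I_n) kk (l j)))
   <= (\prodR_(i : 'I_m) p (u i)) * (\prodR_(j : 'I_n) P (l j)) *
      ((2 * (A u * A u) + 2 * (B l * B l)) / (D * D)).
  move=> u l.
  have w1 : 0 <= \prodR_(i : 'I_m) p (u i) by apply: prodR_ge0 => i _; exact: p0.
  have w2 : 0 <= \prodR_(j : 'I_n) P (l j) by apply: prodR_ge0 => i _; exact: P0.
  have hD2 : 0 < D * D by nra.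
  have hR : 0 <= (2 * (A u * A u) + 2 * (B l * B l)) / (D * D).
    rewrite /Rdiv; apply: Rmult_le_pos; first nra.
    apply: Rlt_le; exact: Rinv_0_lt_compat.
  case: (prod_pos_or_zero p0 u) => [hu|->]; last by rewrite !Rmult_0_l; lra.
  case: (prod_pos_or_zero P0 l) => [hl|->]; last by rewrite Rmult_0_r !Rmult_0_l; lra.
  apply: Rmult_le_compat_l; first exact: Rmult_le_pos.
  rewrite /ind /rltb; case: Rlt_dec => hX /=; first exact: hR.
  have Xp1 : 0 < \prodR_(i : 'I_m) rr (u i) by apply: prodR_gt0 => i _; exact: rr_pos.
  have Xp2 : 0 < \prodR_(j : 'I_n) kk (l j) by apply: prodR_gt0 => j _; exact: kk_pos.
  have hlnX : ln ((\prodR_(i : 'I_m) rr (u i)) * \prodR_(j : 'I_n) kk (l j)) <= g.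
    apply: Rnot_lt_le => hc; apply: hX.
    rewrite -[X in _ < X]exp_ln; [exact: exp_increasing | nra].
  rewrite ln_mult // !ln_prodR in hlnX; try (by move=> i; apply: rr_pos);
    try (by move=> j; apply: kk_pos).
  have eA : A u = \sumR_(i : 'I_m) ln (rr (u i)) - INR m * EZ by rewrite /A sumR_sub card_ord.
  have eB : B l = \sumR_(j : 'I_n) ln (kk (l j)) - INR n * EV by rewrite /B sumR_sub card_ord.
  change (\sumR_(i : 'I_m) ln (rr (u i)) + \sumR_(j : 'I_n) ln (kk (l j)) <= g) in hlnX.
  clearbody A B.
  have hAB : A u + B l <= - D by rewrite eA eB /D /M; lra.
  apply: (Rmult_le_reg_r (D * D)) => //.
  rewrite Rmult_1_l /Rdiv Rmult_assoc Rinv_l; last lra.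
  have h1 : D * D <= (A u + B l) * (A u + B l).
    have : D * D <= (- (A u + B l)) * (- (A u + B l)) by apply: Rmult_le_compat; lra.
    by rewrite -Ropp_mult_distr_l -Ropp_mult_distr_r Ropp_involutive.
  have h2 := Rle_0_sqr (A u - B l); rewrite /Rsqr in h2.
  have e3 : 2 * (A u * A u) + 2 * (B l * B l) = (A u + B l) * (A u + B l) + (A u - B l) * (A u - B l) by ring.
  rewrite e3; lra.
apply: (Rle_trans _ _ _ (sumR_le (fun u _ => sumR_le (fun l _ => hpt u l)))).
apply: Req_le.
transitivity (2 / (D * D) * ((\sumR_(u : {ffun 'I_m -> T}) \sumR_(l : {ffun 'I_n -> L})
     ((\prodR_(i : 'I_m) p (u i)) * (A u * A u)) * (\prodR_(j : 'I_n) P (l j)))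
   + (\sumR_(u : {ffun 'I_m -> T}) \sumR_(l : {ffun 'I_n -> L})
     (\prodR_(i : 'I_m) p (u i)) * ((\prodR_(j : 'I_n) P (l j)) * (B l * B l))))).
  symmetry; rewrite -big_split big_distrr /=; apply: eq_bigr => u _.
  rewrite -big_split big_distrr /=; apply: eq_bigr => l _.
  rewrite /Rdiv; field; lra.
have mu1 : forall i : 'I_n, \sumR_(t : L) (fun _ => P) i t = 1 by move=> i; exact: P1.
have mu2 : forall i : 'I_m, \sumR_(t : T) (fun _ => p) i t = 1 by move=> i; exact: p1.
have eS1 : \sumR_(u : {ffun 'I_m -> T}) \sumR_(l : {ffun 'I_n -> L})
     ((\prodR_(i : 'I_m) p (u i)) * (A u * A u)) * (\prodR_(j : 'I_n) P (l j))
   = INR m * VZ.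
  transitivity (\sumR_(u : {ffun 'I_m -> T}) (\prodR_(i : 'I_m) p (u i)) * (A u * A u)).
    apply: eq_bigr => u _; rewrite -big_distrr /=.
    rewrite (sum_ffun_pmf (mu := fun _ => P) mu1); ring.
  rewrite /A (var_iid 'I_m p1 (f := fun t => ln (rr t) - EZ)) ?card_ord //.
  exact: mean_zero.
have eS2 : \sumR_(u : {ffun 'I_m -> T}) \sumR_(l : {ffun 'I_n -> L})
     (\prodR_(i : 'I_m) p (u i)) * ((\prodR_(j : 'I_n) P (l j)) * (B l * B l))
   = INR n * VV.
  transitivity (\sumR_(u : {ffun 'I_m -> T}) (\prodR_(i : 'I_m) p (u i)) * (INR n * VV)).
    apply: eq_bigr => u _; rewrite -big_distrr /=; congr (_ * _).
    rewrite /B (var_iid 'I_n P1 (f := fun t => ln (kk t) - EV)) ?card_ord //.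
    exact: mean_zero.
  rewrite -big_distrl /= (sum_ffun_pmf (mu := fun _ => p) mu2); ring.
rewrite eS1 eS2 /Rdiv; field; lra.
Qed.
End Tail.

Lemma sum_pair (A B : finType) (G : A * B -> R) :
  \sumR_(t : A * B) G t = \sumR_(a : A) \sumR_(b : B) G (a, b).
Proof. by rewrite pair_bigA; apply: eq_bigr => [[a b]]. Qed.

Lemma sum_if_const (I : finType) (b : bool) (F : I -> R) :
  \sumR_(i : I) (if b then F i else 0) = if b then \sumR_(i : I) F i else 0.
Proof. by case: b => //; rewrite big1. Qed.

Lemma if_and (b c : bool) (x : R) :
  (if b && c then x else 0) = (if b then (if c then x else 0) else 0).
Proof. by case: b. Qed.

Section Model.
Variables (Q X1 X2 Y : finType).
Variables (pq : Q -> R) (px1 : Q -> X1 -> R) (px2 : Q -> X2 -> R) (W : X1 -> X2 -> Y -> R).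
Hypotheses (Hpq : is_pmf pq) (Hpx1 : forall q, is_pmf (px1 q)) (Hpx2 : forall q, is_pmf (px2 q))
  (HW : forall x1 x2, is_pmf (W x1 x2)).

Definition PJ (t : (Q * X1 * X2 * Y)%type) : R :=
  let: (q, x1, x2, y) := t in pq q * px1 q x1 * px2 q x2 * W x1 x2 y.

Lemma pmf_ge0 (T : finType) (f : T -> R) : is_pmf f -> forall t, 0 <= f t.
Proof. by case. Qed.
Lemma pmf_sum1 (T : finType) (f : T -> R) : is_pmf f -> \sumR_(t : T) f t = 1.
Proof. by case=> _; rewrite rsumE. Qed.

Lemma PJ_ge0 t : 0 <= PJ t.
Proof.
case: t => [[[q x1] x2] y] /=.
repeat apply: Rmult_le_pos; apply: pmf_ge0; auto.
Qed.

Lemma margPJ (U : finType) (g : Q -> X1 -> X2 -> U) v :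
  marg PJ (fun t : Q * X1 * X2 * Y => g t.1.1.1 t.1.1.2 t.1.2) v =
  \sumR_(q : Q) \sumR_(x1 : X1) \sumR_(x2 : X2)
     (if g q x1 x2 == v then pq q * px1 q x1 * px2 q x2 else 0).
Proof.
rewrite margE sum_pair sum_pair sum_pair; apply: eq_bigr => q _.
apply: eq_bigr => x1 _; apply: eq_bigr => x2 _ /=.
case: (g q x1 x2 == v); last by rewrite big1.
rewrite -big_distrr /= (pmf_sum1 (HW x1 x2)); ring.
Qed.

Lemma PJ_sum1 : \sumR_(t : Q * X1 * X2 * Y) PJ t = 1.
Proof.
have := margPJ (fun _ _ _ => tt) tt; rewrite margE /= => e.
transitivity (\sumR_(t : Q * X1 * X2 * Y) (if tt == tt then PJ t else 0)) => //.
rewrite e; under eq_bigr => q _ do under eq_bigr => x1 _ do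
  rewrite -big_distrr /= (pmf_sum1 (Hpx2 q)) Rmult_1_r.
under eq_bigr => q _ do rewrite -big_distrr /= (pmf_sum1 (Hpx1 q)) Rmult_1_r.
exact: pmf_sum1.
Qed.

Lemma margPJ_Q q : marg PJ (fun t => t.1.1.1) q = pq q.
Proof.
rewrite (margPJ (fun q _ _ => q)) /=.
under eq_bigr => q' _ do under eq_bigr => x1 _ do rewrite sum_if_const.
under eq_bigr => q' _ do rewrite sum_if_const.
rewrite (sumR_ind' q (fun q => \sumR_(x1 : X1) \sumR_(x2 : X2) _)).
under eq_bigr => x1 _ do rewrite -big_distrr /= (pmf_sum1 (Hpx2 q)) Rmult_1_r.
rewrite -big_distrr /= (pmf_sum1 (Hpx1 q)); ring.
Qed.

Lemma margPJ_X2Q x2 q : marg PJ (fun t => (t.1.2, t.1.1.1)) (x2, q) = pq q * px2 q x2.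
Proof.
rewrite (margPJ (fun q x1 x2 => (x2, q))) /=.
under eq_bigr => q' _ do under eq_bigr => x1 _ do under eq_bigr => x2' _ do
  rewrite xpair_eqE andbC if_and.
under eq_bigr => q' _ do under eq_bigr => x1 _ do rewrite sum_if_const.
under eq_bigr => q' _ do rewrite sum_if_const.
rewrite (sumR_ind' q (fun q => \sumR_(x1 : X1) \sumR_(x2' : X2) _)).
under eq_bigr => x1 _ do rewrite (sumR_ind' x2 (fun x2 => pq q * px1 q x1 * px2 q x2)).
transitivity ((\sumR_(x1 : X1) px1 q x1) * (pq q * px2 q x2)).
  rewrite big_distrl /=; apply: eq_bigr => x1 _; ring.
rewrite (pmf_sum1 (Hpx1 q)); ring.
Qed.

Lemma margPJ_X1Q x1 q : marg PJ (fun t => (t.1.1.2, t.1.1.1)) (x1, q) = pq q * px1 q x1.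
Proof.
rewrite (margPJ (fun q x1 x2 => (x1, q))) /=.
under eq_bigr => q' _ do under eq_bigr => x1' _ do under eq_bigr => x2 _ do
  rewrite xpair_eqE andbC if_and.
under eq_bigr => q' _ do under eq_bigr => x1' _ do rewrite sum_if_const.
under eq_bigr => q' _ do rewrite sum_if_const.
rewrite (sumR_ind' q (fun q => \sumR_(x1 : X1) \sumR_(x2' : X2) _)).
under eq_bigr => x1' _ do rewrite sum_if_const.
rewrite (sumR_ind' x1 (fun x1 => \sumR_(x2' : X2) _)).
rewrite -big_distrr /= (pmf_sum1 (Hpx2 q)); ring.
Qed.

Lemma margPJ_X1X2Q x1 x2 q :
  marg PJ (fun t => (t.1.1.2, (t.1.2, t.1.1.1))) (x1, (x2, q)) = pq q * px1 q x1 * px2 q x2.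
Proof.
rewrite (margPJ (fun q x1 x2 => (x1, (x2, q)))) /=.
under eq_bigr => q' _ do under eq_bigr => x1' _ do under eq_bigr => x2' _ do
  rewrite !xpair_eqE andbC if_and andbC if_and.
under eq_bigr => q' _ do under eq_bigr => x1' _ do rewrite sum_if_const.
under eq_bigr => q' _ do rewrite sum_if_const.
rewrite (sumR_ind' q (fun q => \sumR_(x1 : X1) \sumR_(x2' : X2) _)).
under eq_bigr => x1' _ do rewrite (sumR_ind' x2 (fun x2' => if x1' == x1 then pq q * px1 q x1' * px2 q x2' else 0)).
by rewrite (sumR_ind' x1 (fun x1' => pq q * px1 q x1' * px2 q x2)).
Qed.

Lemma margPJ_X2X1Q x1 x2 q :
  marg PJ (fun t => (t.1.2, (t.1.1.2, t.1.1.1))) (x2, (x1, q)) = pq q * px1 q x1 * px2 q x2.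
Proof.
rewrite (margPJ (fun q x1 x2 => (x2, (x1, q)))) /=.
under eq_bigr => q' _ do under eq_bigr => x1' _ do under eq_bigr => x2' _ do
  rewrite !xpair_eqE andbCA andbC if_and andbC if_and.
under eq_bigr => q' _ do under eq_bigr => x1' _ do rewrite sum_if_const.
under eq_bigr => q' _ do rewrite sum_if_const.
rewrite (sumR_ind' q (fun q => \sumR_(x1 : X1) \sumR_(x2' : X2) _)).
under eq_bigr => x1' _ do rewrite (sumR_ind' x2 (fun x2' => if x1' == x1 then pq q * px1 q x1' * px2 q x2' else 0)).
by rewrite (sumR_ind' x1 (fun x1' => pq q * px1 q x1' * px2 q x2)).
Qed.

Lemma margPJ_X12Q x1 x2 q :
  marg PJ (fun t => ((t.1.1.2, t.1.2), t.1.1.1)) ((x1, x2), q) = pq q * px1 q x1 * px2 q x2.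
Proof.
rewrite (margPJ (fun q x1 x2 => ((x1, x2), q))) /=.
under eq_bigr => q' _ do under eq_bigr => x1' _ do under eq_bigr => x2' _ do
  rewrite !xpair_eqE andbC if_and andbC if_and.
under eq_bigr => q' _ do under eq_bigr => x1' _ do rewrite sum_if_const.
under eq_bigr => q' _ do rewrite sum_if_const.
rewrite (sumR_ind' q (fun q => \sumR_(x1 : X1) \sumR_(x2' : X2) _)).
under eq_bigr => x1' _ do rewrite (sumR_ind' x2 (fun x2' => if x1' == x1 then pq q * px1 q x1' * px2 q x2' else 0)).
by rewrite (sumR_ind' x1 (fun x1' => pq q * px1 q x1' * px2 q x2)).
Qed.
End Model.

Definition EX (T : finType) (w f : T -> R) : R := \sumR_(t : T) w t * f t.

Section EXlemmas.
Variables (T : finType) (w : T -> R).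

Lemma EX_ext (f g : T -> R) : (forall t, f t = g t) -> EX w f = EX w g.
Proof. by move=> h; apply: eq_bigr => t _; rewrite h. Qed.

Lemma EX_add (f g : T -> R) : EX w (fun t => f t + g t) = EX w f + EX w g.
Proof. by rewrite /EX -big_split; apply: eq_bigr => t _ /=; ring. Qed.

Lemma EX_scal c (f : T -> R) : EX w (fun t => c * f t) = c * EX w f.
Proof. by rewrite /EX big_distrr; apply: eq_bigr => t _ /=; ring. Qed.

Lemma EX_sum (A : finType) (f : A -> T -> R) :
  EX w (fun t => \sumR_(a : A) f a t) = \sumR_(a : A) EX w (f a).
Proof.
rewrite /EX; under eq_bigr do rewrite big_distrr.
by rewrite exchange_big.
Qed.

Lemma EX_if (b : bool) (f : T -> R) : EX w (fun t => if b then f t else 0) = if b then EX w f else 0.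
Proof. by case: b => //; rewrite /EX big1 // => t _; ring. Qed.

Hypothesis w0 : forall t, 0 <= w t.

Lemma EX_le (f g : T -> R) : (forall t, f t <= g t) -> EX w f <= EX w g.
Proof. move=> h; apply: sumR_le => t _; apply: Rmult_le_compat_l => //. Qed.

Lemma EX_ge0 (f : T -> R) : (forall t, 0 <= f t) -> 0 <= EX w f.
Proof. move=> h; apply: sumR_ge0 => t _; exact: Rmult_le_pos. Qed.

Hypothesis w1 : \sumR_(t : T) w t = 1.

Lemma EX_const c : EX w (fun _ => c) = c.
Proof. by rewrite /EX -big_distrl /= w1; ring. Qed.

Lemma EX_le_const (f : T -> R) c : (forall t, f t <= c) -> EX w f <= c.
Proof. move=> h; rewrite -[X in _ <= X](EX_const c); exact: EX_le. Qed.
End EXlemmas.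

Lemma EX_swap (A B : finType) (wa : A -> R) (wb : B -> R) (f : A -> B -> R) :
  EX wa (fun a => EX wb (fun b => f a b)) = EX wb (fun b => EX wa (fun a => f a b)).
Proof.
rewrite /EX; under eq_bigr do rewrite big_distrr.
rewrite exchange_big; apply: eq_bigr => b _ /=.
rewrite big_distrr; apply: eq_bigr => a _ /=; ring.
Qed.

Section EXprod.
Variables (I T : finType) (mu : I -> T -> R).
Definition pw (g : {ffun I -> T}) : R := \prodR_(i : I) mu i (g i).

Lemma pw_ge0 : (forall i t, 0 <= mu i t) -> forall g, 0 <= pw g.
Proof. move=> h g; apply: prodR_ge0 => i _; exact: h. Qed.

Lemma EX_prod (h : I -> T -> R) :
  EX pw (fun g => \prodR_(i : I) h i (g i)) = \prodR_(i : I) EX (mu i) (h i).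
Proof. exact: (sum_ffun_prod2 mu h). Qed.

Hypothesis mu1 : forall i, \sumR_(t : T) mu i t = 1.

Lemma pw_sum1 : \sumR_(g : {ffun I -> T}) pw g = 1.
Proof. exact: sum_ffun_pmf. Qed.

Lemma EX_marg1 (i0 : I) (F : T -> R) : EX pw (fun g => F (g i0)) = EX (mu i0) F.
Proof. exact: marg1. Qed.

Lemma EX_marg2 (i0 i1 : I) (F : T -> T -> R) : i0 != i1 ->
  EX pw (fun g => F (g i0) (g i1)) = EX (mu i0) (fun t => EX (mu i1) (fun t' => F t t')).
Proof.
move=> ne; rewrite /EX /pw (marg2 mu1) //=.
apply: eq_bigr => t _; rewrite big_distrr; apply: eq_bigr => t' _ /=; ring.
Qed.
End EXprod.

Lemma EX_zip4 (I Q X1 X2 Y : finType) (pq : Q -> R) (px1 : Q -> X1 -> R) (px2 : Q -> X2 -> R)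
  (W : X1 -> X2 -> Y -> R)
  (G : {ffun I -> Q} -> {ffun I -> X1} -> {ffun I -> X2} -> {ffun I -> Y} -> R) :
  EX (pw (fun _ : I => pq)) (fun q => EX (pw (fun j => px1 (q j))) (fun x1 =>
    EX (pw (fun j => px2 (q j))) (fun x2 => EX (pw (fun j => W (x1 j) (x2 j))) (fun y =>
      G q x1 x2 y))))
  = EX (pw (fun _ : I => PJ pq px1 px2 W)) (fun l =>
      G [ffun j => (l j).1.1.1] [ffun j => (l j).1.1.2] [ffun j => (l j).1.2] [ffun j => (l j).2]).
Proof.
transitivity (\sumR_(q : {ffun I -> Q}) \sumR_(x1 : {ffun I -> X1})
  \sumR_(x2 : {ffun I -> X2}) \sumR_(y : {ffun I -> Y})
  (pw (fun _ : I => pq) q * pw (fun j => px1 (q j)) x1 * pw (fun j => px2 (q j)) x2 *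
   pw (fun j => W (x1 j) (x2 j)) y) * G q x1 x2 y).
  rewrite /EX; apply: eq_bigr => q _; rewrite big_distrr /=; apply: eq_bigr => x1 _.
  rewrite -Rmult_assoc big_distrr /=; apply: eq_bigr => x2 _.
  rewrite -Rmult_assoc big_distrr /=; apply: eq_bigr => y _; ring.
rewrite sum_zip sum_zip sum_zip /EX; apply: eq_bigr => l _.
congr (_ * _); last by congr G; apply/ffunP => j; rewrite !ffunE.
rewrite /pw -!big_split /=; apply: eq_bigr => j _; rewrite !ffunE.
by case: (l j) => [[[q x1] x2] y].
Qed.

Lemma term_le_sum (T : finType) (F : T -> R) i : (forall j, 0 <= F j) -> F i <= \sumR_(j : T) F j.
Proof.
move=> h; rewrite (bigD1 i) //=.
have : 0 <= \sumR_(j | j != i) F j by apply: sumR_ge0 => j _; exact: h.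
lra.
Qed.

Section Dec.
Variables (A1 A2 : finType) (c1 c2 c3 : A1 * A2 -> bool) (d : A1 * A2).
Definition decf : A1 * A2 := odflt d [pick a | [&& c1 a, c2 a & c3 a]].

Lemma dec_err (s : A1 * A2) :
  ind (decf != s) <=
  ind (~~ c1 s) + ind (~~ c2 s) + ind (~~ c3 s)
  + \sumR_(a1 : A1) (if a1 != s.1 then ind (c1 (a1, s.2)) else 0)
  + \sumR_(a2 : A2) (if a2 != s.2 then ind (c2 (s.1, a2)) else 0)
  + \sumR_(a1 : A1) \sumR_(a2 : A2) (if (a1 != s.1) && (a2 != s.2) then ind (c3 (a1, a2)) else 0).
Proof.
have i0 := ind_ge0.
have S1 : 0 <= \sumR_(a1 : A1) (if a1 != s.1 then ind (c1 (a1, s.2)) else 0).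
  apply: sumR_ge0 => a _; case: ifP => _; [exact: ind_ge0 | lra].
have S2 : 0 <= \sumR_(a2 : A2) (if a2 != s.2 then ind (c2 (s.1, a2)) else 0).
  apply: sumR_ge0 => a _; case: ifP => _; [exact: ind_ge0 | lra].
have S3 : 0 <= \sumR_(a1 : A1) \sumR_(a2 : A2) (if (a1 != s.1) && (a2 != s.2) then ind (c3 (a1, a2)) else 0).
  apply: sumR_ge0 => a _; apply: sumR_ge0 => b _; case: ifP => _; [exact: ind_ge0 | lra].
have I1 := i0 (~~ c1 s); have I2 := i0 (~~ c2 s); have I3 := i0 (~~ c3 s).
rewrite /decf; case: pickP => [a /and3P [h1 h2 h3] | hn] /=; last first.
  move: (hn s) => /=; rewrite /ind in S1 S2 S3 *.
  case: (c1 s); case: (c2 s); case: (c3 s) => //= _; case: ifP => _; lra.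
case: eqP => [_ | hne]; first by rewrite /ind /= in S1 S2 S3 I1 I2 I3 *; lra.
rewrite /ind /=.
rewrite /ind in S1 S2 S3 I1 I2 I3 *.
case: a h1 h2 h3 hne => a1 a2 h1 h2 h3 hne; case: s S1 S2 S3 I1 I2 I3 hne => s1 s2 S1 S2 S3 I1 I2 I3 hne /=.
rewrite /= in S1 S2 S3 I1 I2 I3 *.
have g0 : forall b : bool, 0 <= (if b then 1 else 0) by case; lra.
case: (boolP (a1 == s1)) => [/eqP e1 | ne1].
  subst a1.
  have ne2 : a2 != s2 by apply/eqP => e2; apply: hne; rewrite e2.
  have := term_le_sum a2 (F := fun a2 => if a2 != s2 then (if c2 (s1, a2) then 1 else 0) else 0).
  rewrite /= ne2 h2 => h.
  have := h (fun j => ltac:(case: ifP => _; [exact: g0 | lra])).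
  lra.
case: (boolP (a2 == s2)) => [/eqP e2 | ne2].
  subst a2.
  have := term_le_sum a1 (F := fun a1 => if a1 != s1 then (if c1 (a1, s2) then 1 else 0) else 0).
  rewrite /= ne1 h1 => h.
  have := h (fun j => ltac:(case: ifP => _; [exact: g0 | lra])).
  lra.
have h0 : forall a1 a2, 0 <= (if (a1 != s1) && (a2 != s2) then (if c3 (a1, a2) then 1 else 0) else 0).
  move=> x y; case: ifP => _; [exact: g0 | lra].
have ha := term_le_sum a2 (F := fun a2 => (if (a1 != s1) && (a2 != s2) then (if c3 (a1, a2) then 1 else 0) else 0)) (h0 a1).
have hb := term_le_sum a1 (F := fun a1 => \sumR_(a2 : A2) (if (a1 != s1) && (a2 != s2) then (if c3 (a1, a2) then 1 else 0) else 0)) (fun j => sumR_ge0 (fun k _ => h0 j k)).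
rewrite /= ne1 ne2 h3 /= in ha hb.
lra.
Qed.
Lemma dec_err2 (s1 : A1) (s2 : A2) :
  ind (decf != (s1, s2)) <=
  ind (~~ c1 (s1, s2)) + ind (~~ c2 (s1, s2)) + ind (~~ c3 (s1, s2))
  + \sumR_(a1 : A1) (if a1 != s1 then ind (c1 (a1, s2)) else 0)
  + \sumR_(a2 : A2) (if a2 != s2 then ind (c2 (s1, a2)) else 0)
  + \sumR_(a1 : A1) \sumR_(a2 : A2) (if (a1 != s1) && (a2 != s2) then ind (c3 (a1, a2)) else 0).
Proof. exact: (dec_err (s1, s2)). Qed.
End Dec.

Section Code.
Variables (S1 S2 W1 W2 X1 X2 Y1 Y2 Q : finType).
Variables (p : src S1 S2 W1 W2 -> R) (W : X1 -> X2 -> (Y1 * Y2)%type -> R)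
  (pq : Q -> R) (px1 : Q -> X1 -> R) (px2 : Q -> X2 -> R).
Hypotheses (Hp : is_pmf p) (HW : forall x1 x2, is_pmf (W x1 x2)) (Hpq : is_pmf pq)
  (Hpx1 : forall q, is_pmf (px1 q)) (Hpx2 : forall q, is_pmf (px2 q)).
Variables (m n : nat).

Local Notation U := (src S1 S2 W1 W2).
Local Notation Sm1 := {ffun 'I_m -> S1}.
Local Notation Sm2 := {ffun 'I_m -> S2}.
Local Notation Xn1 := {ffun 'I_n -> X1}.
Local Notation Xn2 := {ffun 'I_n -> X2}.
Local Notation CB1 := {ffun Sm1 -> Xn1}.
Local Notation CB2 := {ffun Sm2 -> Xn2}.
Local Notation Qn := {ffun 'I_n -> Q}.
Local Notation Yn := {ffun 'I_n -> (Y1 * Y2)%type}.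
Local Notation Um := {ffun 'I_m -> U}.

Definition s1of (u : Um) : Sm1 := [ffun i => (u i).1.1.1].
Definition s2of (u : Um) : Sm2 := [ffun i => (u i).1.1.2].

Local Notation pu := (pw (fun _ : 'I_m => p)).
Local Notation wq := (pw (fun _ : 'I_n => pq)).
Local Notation mu1 q := (pw (fun j : 'I_n => px1 (q j))).
Local Notation mu2 q := (pw (fun j : 'I_n => px2 (q j))).
Local Notation w1 q := (pw (fun _ : Sm1 => mu1 q)).
Local Notation w2 q := (pw (fun _ : Sm2 => mu2 q)).
Local Notation Wn x1 x2 := (pw (fun j : 'I_n => W (x1 j) (x2 j))).

Definition AV (F : Um -> Qn -> CB1 -> CB2 -> Yn -> R) : R :=
  EX pu (fun u => EX wq (fun q => EX (w1 q) (fun C1 => EX (w2 q) (fun C2 =>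
    EX (Wn (C1 (s1of u)) (C2 (s2of u))) (fun y => F u q C1 C2 y))))).

Lemma pu_ge0 u : 0 <= pu u. Proof. apply: pw_ge0 => i t; exact: pmf_ge0. Qed.
Lemma pu_sum1 : \sumR_(u : Um) pu u = 1. Proof. apply: pw_sum1 => i; exact: pmf_sum1. Qed.
Lemma wq_ge0 q : 0 <= wq q. Proof. apply: pw_ge0 => i t; exact: pmf_ge0. Qed.
Lemma wq_sum1 : \sumR_(q : Qn) wq q = 1. Proof. apply: pw_sum1 => i; exact: pmf_sum1. Qed.
Lemma mu1_ge0 q x : 0 <= mu1 q x. Proof. apply: pw_ge0 => i t; exact: pmf_ge0. Qed.
Lemma mu1_sum1 q : \sumR_(x : Xn1) mu1 q x = 1. Proof. apply: pw_sum1 => i; exact: pmf_sum1. Qed.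
Lemma mu2_ge0 q x : 0 <= mu2 q x. Proof. apply: pw_ge0 => i t; exact: pmf_ge0. Qed.
Lemma mu2_sum1 q : \sumR_(x : Xn2) mu2 q x = 1. Proof. apply: pw_sum1 => i; exact: pmf_sum1. Qed.
Lemma w1_ge0 q C : 0 <= w1 q C. Proof. apply: pw_ge0 => i t; exact: mu1_ge0. Qed.
Lemma w1_sum1 q : \sumR_(C : CB1) w1 q C = 1. Proof. apply: pw_sum1 => i; exact: mu1_sum1. Qed.
Lemma w2_ge0 q C : 0 <= w2 q C. Proof. apply: pw_ge0 => i t; exact: mu2_ge0. Qed.
Lemma w2_sum1 q : \sumR_(C : CB2) w2 q C = 1. Proof. apply: pw_sum1 => i; exact: mu2_sum1. Qed.
Lemma Wn_ge0 x1 x2 y : 0 <= Wn x1 x2 y. Proof. apply: pw_ge0 => i t; exact: pmf_ge0. Qed.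
Lemma Wn_sum1 x1 x2 : \sumR_(y : Yn) Wn x1 x2 y = 1. Proof. apply: pw_sum1 => i; exact: pmf_sum1. Qed.

Lemma AV_le F G : (forall u q C1 C2 y, F u q C1 C2 y <= G u q C1 C2 y) -> AV F <= AV G.
Proof.
move=> h; apply: EX_le => [u|u]; first exact: pu_ge0.
apply: EX_le => [q|q]; first exact: wq_ge0.
apply: EX_le => [C1|C1]; first exact: w1_ge0.
apply: EX_le => [C2|C2]; first exact: w2_ge0.
apply: EX_le => [y|y]; [exact: Wn_ge0 | exact: h].
Qed.

Lemma AV_add F G : AV (fun u q C1 C2 y => F u q C1 C2 y + G u q C1 C2 y) = AV F + AV G.
Proof.
rewrite /AV -EX_add; apply: EX_ext => u; rewrite -EX_add; apply: EX_ext => q.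
rewrite -EX_add; apply: EX_ext => C1; rewrite -EX_add; apply: EX_ext => C2.
by rewrite -EX_add.
Qed.

Lemma AV_ext F G : (forall u q C1 C2 y, F u q C1 C2 y = G u q C1 C2 y) -> AV F = AV G.
Proof.
move=> h; rewrite /AV; apply: EX_ext => u; apply: EX_ext => q; apply: EX_ext => C1.
apply: EX_ext => C2; apply: EX_ext => y; exact: h.
Qed.

Lemma AV_marg (F : Um -> Qn -> Xn1 -> Xn2 -> Yn -> R) :
  AV (fun u q C1 C2 y => F u q (C1 (s1of u)) (C2 (s2of u)) y) =
  EX pu (fun u => EX wq (fun q => EX (mu1 q) (fun x1 => EX (mu2 q) (fun x2 =>
     EX (Wn x1 x2) (fun y => F u q x1 x2 y))))).
Proof.
rewrite /AV; apply: EX_ext => u; apply: EX_ext => q.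
transitivity (EX (w1 q) (fun C1 => EX (mu2 q) (fun x2 =>
   EX (Wn (C1 (s1of u)) x2) (fun y => F u q (C1 (s1of u)) x2 y)))).
  apply: EX_ext => C1.
  exact: (EX_marg1 (fun _ => mu2_sum1 q) (s2of u)
    (fun x2 => EX (Wn (C1 (s1of u)) x2) (fun y => F u q (C1 (s1of u)) x2 y))).
exact: (EX_marg1 (fun _ => mu1_sum1 q) (s1of u)
  (fun x1 => EX (mu2 q) (fun x2 => EX (Wn x1 x2) (fun y => F u q x1 x2 y)))).
Qed.

Lemma errE (C1 : CB1) (C2 : CB2) (g1 : {ffun 'I_n -> Y1} -> {ffun 'I_m -> W1} -> Sm1 * Sm2)
  (g2 : {ffun 'I_n -> Y2} -> {ffun 'I_m -> W2} -> Sm1 * Sm2) :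
  err_prob p W (fun s => C1 s) (fun s => C2 s) g1 g2 =
  EX pu (fun u => EX (Wn (C1 (s1of u)) (C2 (s2of u))) (fun y =>
    ind (~~ ((g1 [ffun j => (y j).1] [ffun i => (u i).1.2] == (s1of u, s2of u)) &&
             (g2 [ffun j => (y j).2] [ffun i => (u i).2] == (s1of u, s2of u)))))).
Proof.
rewrite /err_prob rsumE /EX; apply: eq_bigr => u _.
rewrite rprodE rsumE; congr (_ * _); apply: eq_bigr => y _.
rewrite rprodE /ind /s1of /s2of.
by case: ifP.
Qed.

Lemma avg_swap (G : Um -> Qn -> CB1 -> CB2 -> R) :
  EX wq (fun q => EX (w1 q) (fun C1 => EX (w2 q) (fun C2 => EX pu (fun u => G u q C1 C2)))) =
  EX pu (fun u => EX wq (fun q => EX (w1 q) (fun C1 => EX (w2 q) (fun C2 => G u q C1 C2)))).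
Proof.
under EX_ext => q do under EX_ext => C1 do rewrite EX_swap.
under EX_ext => q do rewrite EX_swap.
by rewrite EX_swap.
Qed.

Lemma exists_code (E : Qn -> CB1 -> CB2 -> R) eps :
  EX wq (fun q => EX (w1 q) (fun C1 => EX (w2 q) (fun C2 => E q C1 C2))) < eps ->
  exists q C1 C2, E q C1 C2 < eps.
Proof.
move=> h.
have [q hq] := sumR_exists (@wq_ge0) wq_sum1 h.
have [C1 hC1] := sumR_exists (@w1_ge0 q) (w1_sum1 q) hq.
have [C2 hC2] := sumR_exists (@w2_ge0 q) (w2_sum1 q) hC1.
by exists q, C1, C2.
Qed.

Variables (Wt Yt : finType) (sw : U -> Wt) (yp : (Y1 * Y2)%type -> Yt) (ga : R).

Definition wv (u : Um) : {ffun 'I_m -> Wt} := [ffun i => sw (u i)].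
Definition yv (y : Yn) : {ffun 'I_n -> Yt} := [ffun j => yp (y j)].

Definition cnd (r : S1 -> S2 -> Wt -> R) (k : Q -> X1 -> X2 -> Yt -> R) (q : Qn) (C1 : CB1) (C2 : CB2)
    (y : {ffun 'I_n -> Yt}) (w : {ffun 'I_m -> Wt}) (a : Sm1 * Sm2) : bool :=
  rltb (exp ga) ((\prodR_(i : 'I_m) r (a.1 i) (a.2 i) (w i)) *
                 \prodR_(j : 'I_n) k (q j) (C1 a.1 j) (C2 a.2 j) (y j)).

Lemma AV_tail (r : S1 -> S2 -> Wt -> R) (k : Q -> X1 -> X2 -> Yt -> R) :
  let rr := fun t : U => r t.1.1.1 t.1.1.2 (sw t) in
  let kk := fun l : (Q * X1 * X2 * (Y1 * Y2))%type => k l.1.1.1 l.1.1.2 l.1.2 (yp l.2) in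
  let M := INR m * EZ p rr + INR n * EV (PJ pq px1 px2 W) kk in
  (forall t, 0 < p t -> 0 < rr t) -> (forall l, 0 < PJ pq px1 px2 W l -> 0 < kk l) ->
  ga < M ->
  AV (fun u q C1 C2 y => ind (~~ cnd r k q C1 C2 (yv y) (wv u) (s1of u, s2of u))) <=
  2 * (INR m * VZ p rr + INR n * VV (PJ pq px1 px2 W) kk) / ((M - ga) * (M - ga)).
Proof.
move=> rr kk M hr hk hM.
pose F := fun (u : Um) (q : Qn) (x1 : Xn1) (x2 : Xn2) (y : Yn) =>
  ind (~~ rltb (exp ga) ((\prodR_(i : 'I_m) rr (u i)) *
       \prodR_(j : 'I_n) k (q j) (x1 j) (x2 j) (yp (y j)))).
rewrite (AV_ext (G := fun u q C1 C2 y => F u q (C1 (s1of u)) (C2 (s2of u)) y)); last first.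
  move=> u q C1 C2 y; rewrite /cnd /=; congr (ind (~~ rltb _ (_ * _))).
    by apply: eq_bigr => i _; rewrite /s1of /s2of /wv !ffunE.
  by apply: eq_bigr => j _; rewrite /yv !ffunE.
rewrite (AV_marg F).
under EX_ext => u do rewrite EX_zip4.
rewrite /F.
have P0 := PJ_ge0 Hpq Hpx1 Hpx2 HW.
have P1 : \sumR_(t : Q * X1 * X2 * (Y1 * Y2)) PJ pq px1 px2 W t = 1 by exact: PJ_sum1.
have p1 := pmf_sum1 Hp.
have := tail_bound (pmf_ge0 Hp) p1 P0 P1 hr hk hM.
apply: Rle_trans; apply: Req_le.
rewrite /EX; apply: eq_bigr => u _; rewrite big_distrr /=; apply: eq_bigr => l _.
rewrite /pw -Rmult_assoc; congr (_ * ind (~~ rltb _ (_ * _))).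
by apply: eq_bigr => j _; rewrite !ffunE.
Qed.

Lemma EX_zero (T : finType) (w : T -> R) : EX w (fun _ => 0) = 0.
Proof. by rewrite /EX big1 // => t _; ring. Qed.

Lemma Kp_le1 (k : Q -> X1 -> X2 -> Yt -> R) (hk0 : forall q x1 x2 y, 0 <= k q x1 x2 y)
  (hk : forall q x2 y, EX (px1 q) (fun x => k q x x2 y) <= 1) q x2 (y : {ffun 'I_n -> Yt}) :
  EX (mu1 q) (fun x' => \prodR_(j : 'I_n) k (q j) (x' j) (x2 j) (y j)) <= 1.
Proof.
rewrite (@EX_prod _ _ (fun j => px1 (q j)) (fun j x => k (q j) x (x2 j) (y j))); apply: prodR_le1 => j _; split; last exact: hk.
apply: EX_ge0 => [t|t]; [exact: pmf_ge0 | exact: hk0].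
Qed.

Lemma Kp2_le1 (k : Q -> X1 -> X2 -> Yt -> R) (hk0 : forall q x1 x2 y, 0 <= k q x1 x2 y)
  (hk : forall q x1 y, EX (px2 q) (fun x => k q x1 x y) <= 1) q x1 (y : {ffun 'I_n -> Yt}) :
  EX (mu2 q) (fun x' => \prodR_(j : 'I_n) k (q j) (x1 j) (x' j) (y j)) <= 1.
Proof.
rewrite (@EX_prod _ _ (fun j => px2 (q j)) (fun j x => k (q j) (x1 j) x (y j))); apply: prodR_le1 => j _; split; last exact: hk.
apply: EX_ge0 => [t|t]; [exact: pmf_ge0 | exact: hk0].
Qed.

Lemma rho_prod_le1 (r : S1 -> S2 -> Wt -> R) (hr0 : forall a1 a2 w, 0 <= r a1 a2 w)
  (hr : forall a2 w, \sumR_(a : S1) r a a2 w <= 1) (s2 : Sm2) (w : {ffun 'I_m -> Wt}) :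
  \sumR_(a1 : Sm1) \prodR_(i : 'I_m) r (a1 i) (s2 i) (w i) <= 1.
Proof.
rewrite (sum_ffun_prod (fun i a => r a (s2 i) (w i))); apply: prodR_le1 => i _; split; last exact: hr.
apply: sumR_ge0 => a _; exact: hr0.
Qed.

Lemma rho_prod2_le1 (r : S1 -> S2 -> Wt -> R) (hr0 : forall a1 a2 w, 0 <= r a1 a2 w)
  (hr : forall a1 w, \sumR_(a : S2) r a1 a w <= 1) (s1 : Sm1) (w : {ffun 'I_m -> Wt}) :
  \sumR_(a2 : Sm2) \prodR_(i : 'I_m) r (s1 i) (a2 i) (w i) <= 1.
Proof.
rewrite (sum_ffun_prod (fun i a => r (s1 i) a (w i))); apply: prodR_le1 => i _; split; last exact: hr.
apply: sumR_ge0 => a _; exact: hr0.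
Qed.

Lemma AV_markov1 (r : S1 -> S2 -> Wt -> R) (k : Q -> X1 -> X2 -> Yt -> R) :
  (forall a1 a2 w, 0 <= r a1 a2 w) -> (forall q x1 x2 y, 0 <= k q x1 x2 y) ->
  (forall a2 w, \sumR_(a : S1) r a a2 w <= 1) ->
  (forall q x2 y, EX (px1 q) (fun x => k q x x2 y) <= 1) ->
  AV (fun u q C1 C2 y => \sumR_(a1 : Sm1)
        (if a1 != s1of u then ind (cnd r k q C1 C2 (yv y) (wv u) (a1, s2of u)) else 0))
  <= exp (- ga).
Proof.
move=> hr0 hk0 hr hk.
pose Rho (u : Um) (a1 : Sm1) := \prodR_(i : 'I_m) r (a1 i) (s2of u i) (wv u i).
pose Kp (q : Qn) (x' : Xn1) (x2 : Xn2) (y : Yn) := \prodR_(j : 'I_n) k (q j) (x' j) (x2 j) (yv y j).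
have Rho0 : forall u a1, 0 <= Rho u a1 by move=> u a1; apply: prodR_ge0 => i _; exact: hr0.
have Kp0 : forall q x' x2 y, 0 <= Kp q x' x2 y by move=> *; apply: prodR_ge0 => i _; exact: hk0.
have c0 := exp_pos (- ga).
apply: (Rle_trans _ (AV (fun u q C1 C2 y => \sumR_(a1 : Sm1)
   (if a1 != s1of u then exp (- ga) * Rho u a1 * Kp q (C1 a1) (C2 (s2of u)) y else 0)))).
  apply: AV_le => u q C1 C2 y; apply: sumR_le => a1 _; case: ifP => _; last lra.
  rewrite /cnd /=.
  apply: Rle_trans; first apply: ind_markov.
    apply: Rmult_le_pos; [exact: Rho0 | exact: Kp0].
  apply: Req_le; rewrite /Rho /Kp; set A1 := \prodR_(i : _) _; set A2 := \prodR_(j : _) _; ring.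
pose B (u : Um) (a1 : Sm1) := EX wq (fun q => EX (w1 q) (fun C1 => EX (w2 q) (fun C2 =>
   EX (Wn (C1 (s1of u)) (C2 (s2of u))) (fun y => Kp q (C1 a1) (C2 (s2of u)) y)))).
have eAV : AV (fun u q C1 C2 y => \sumR_(a1 : Sm1)
   (if a1 != s1of u then exp (- ga) * Rho u a1 * Kp q (C1 a1) (C2 (s2of u)) y else 0))
  = EX pu (fun u => \sumR_(a1 : Sm1) (if a1 != s1of u then exp (- ga) * Rho u a1 * B u a1 else 0)).
  rewrite /AV; apply: EX_ext => u.
  under EX_ext => q do under EX_ext => C1 do under EX_ext => C2 do rewrite EX_sum.
  under EX_ext => q do under EX_ext => C1 do rewrite EX_sum.
  under EX_ext => q do rewrite EX_sum.
  rewrite EX_sum; apply: eq_bigr => a1 _.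
  case: ifP => _; last first.
    under EX_ext => q do under EX_ext => C1 do under EX_ext => C2 do rewrite EX_zero.
    under EX_ext => q do under EX_ext => C1 do rewrite EX_zero.
    under EX_ext => q do rewrite EX_zero.
    by rewrite EX_zero.
  under EX_ext => q do under EX_ext => C1 do under EX_ext => C2 do rewrite EX_scal.
  under EX_ext => q do under EX_ext => C1 do rewrite EX_scal.
  under EX_ext => q do rewrite EX_scal.
  by rewrite EX_scal.
rewrite eAV.
have hB : forall u a1, a1 != s1of u -> B u a1 <= 1.
  move=> u a1 ne.
  apply: EX_le_const; [move=> q; exact: wq_ge0 | exact: wq_sum1 | move=> q].
  apply: (Rle_trans _ (EX (w1 q) (fun C1 => EX (mu2 q) (fun x2 =>
     EX (Wn (C1 (s1of u)) x2) (fun y => Kp q (C1 a1) x2 y))))).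
    apply: Req_le; apply: EX_ext => C1.
    exact: (EX_marg1 (fun _ => mu2_sum1 q) (s2of u)
      (fun x2 => EX (Wn (C1 (s1of u)) x2) (fun y => Kp q (C1 a1) x2 y))).
  rewrite (EX_marg2 (fun _ => mu1_sum1 q)
    (fun x x' => EX (mu2 q) (fun x2 => EX (Wn x x2) (fun y => Kp q x' x2 y)))); last by rewrite eq_sym.
  apply: EX_le_const; [move=> x; exact: mu1_ge0 | exact: mu1_sum1 | move=> x]; rewrite EX_swap.
  apply: EX_le_const; [move=> x2; exact: mu2_ge0 | exact: mu2_sum1 | move=> x2]; rewrite EX_swap.
  apply: EX_le_const; [move=> y; exact: Wn_ge0 | exact: Wn_sum1 | move=> y]; exact: (Kp_le1 hk0 hk q x2 (yv y)).
apply: EX_le_const; [move=> u; exact: pu_ge0 | exact: pu_sum1 | move=> u].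
apply: (Rle_trans _ (\sumR_(a1 : Sm1) exp (- ga) * Rho u a1)).
  apply: sumR_le => a1 _; case: ifP => [ne|_].
    rewrite -[X in _ <= X]Rmult_1_r; apply: Rmult_le_compat_l.
      apply: Rmult_le_pos; [lra | exact: Rho0].
    exact: hB.
  apply: Rmult_le_pos; [lra | exact: Rho0].
rewrite -big_distrr /= -[X in _ <= X]Rmult_1_r; apply: Rmult_le_compat_l; first lra.
exact: (rho_prod_le1 hr0 hr (s2of u) (wv u)).
Qed.

Lemma AV_markov2 (r : S1 -> S2 -> Wt -> R) (k : Q -> X1 -> X2 -> Yt -> R) :
  (forall a1 a2 w, 0 <= r a1 a2 w) -> (forall q x1 x2 y, 0 <= k q x1 x2 y) ->
  (forall a1 w, \sumR_(a : S2) r a1 a w <= 1) ->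
  (forall q x1 y, EX (px2 q) (fun x => k q x1 x y) <= 1) ->
  AV (fun u q C1 C2 y => \sumR_(a2 : Sm2)
        (if a2 != s2of u then ind (cnd r k q C1 C2 (yv y) (wv u) (s1of u, a2)) else 0))
  <= exp (- ga).
Proof.
move=> hr0 hk0 hr hk.
pose Rho (u : Um) (a2 : Sm2) := \prodR_(i : 'I_m) r (s1of u i) (a2 i) (wv u i).
pose Kp (q : Qn) (x1 : Xn1) (x' : Xn2) (y : Yn) := \prodR_(j : 'I_n) k (q j) (x1 j) (x' j) (yv y j).
have Rho0 : forall u a2, 0 <= Rho u a2 by move=> u a2; apply: prodR_ge0 => i _; exact: hr0.
have Kp0 : forall q x1 x' y, 0 <= Kp q x1 x' y by move=> *; apply: prodR_ge0 => i _; exact: hk0.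
have c0 := exp_pos (- ga).
apply: (Rle_trans _ (AV (fun u q C1 C2 y => \sumR_(a2 : Sm2)
   (if a2 != s2of u then exp (- ga) * Rho u a2 * Kp q (C1 (s1of u)) (C2 a2) y else 0)))).
  apply: AV_le => u q C1 C2 y; apply: sumR_le => a2 _; case: ifP => _; last lra.
  rewrite /cnd /=.
  apply: Rle_trans; first apply: ind_markov.
    apply: Rmult_le_pos; [exact: Rho0 | exact: Kp0].
  apply: Req_le; rewrite /Rho /Kp; set A1 := \prodR_(i : _) _; set A2 := \prodR_(j : _) _; ring.
pose B (u : Um) (a2 : Sm2) := EX wq (fun q => EX (w1 q) (fun C1 => EX (w2 q) (fun C2 =>
   EX (Wn (C1 (s1of u)) (C2 (s2of u))) (fun y => Kp q (C1 (s1of u)) (C2 a2) y)))).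
have eAV : AV (fun u q C1 C2 y => \sumR_(a2 : Sm2)
   (if a2 != s2of u then exp (- ga) * Rho u a2 * Kp q (C1 (s1of u)) (C2 a2) y else 0))
  = EX pu (fun u => \sumR_(a2 : Sm2) (if a2 != s2of u then exp (- ga) * Rho u a2 * B u a2 else 0)).
  rewrite /AV; apply: EX_ext => u.
  under EX_ext => q do under EX_ext => C1 do under EX_ext => C2 do rewrite EX_sum.
  under EX_ext => q do under EX_ext => C1 do rewrite EX_sum.
  under EX_ext => q do rewrite EX_sum.
  rewrite EX_sum; apply: eq_bigr => a2 _.
  case: ifP => _; last first.
    under EX_ext => q do under EX_ext => C1 do under EX_ext => C2 do rewrite EX_zero.
    under EX_ext => q do under EX_ext => C1 do rewrite EX_zero.
    under EX_ext => q do rewrite EX_zero.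
    by rewrite EX_zero.
  under EX_ext => q do under EX_ext => C1 do under EX_ext => C2 do rewrite EX_scal.
  under EX_ext => q do under EX_ext => C1 do rewrite EX_scal.
  under EX_ext => q do rewrite EX_scal.
  by rewrite EX_scal.
rewrite eAV.
have hB : forall u a2, a2 != s2of u -> B u a2 <= 1.
  move=> u a2 ne.
  apply: EX_le_const; [move=> q; exact: wq_ge0 | exact: wq_sum1 | move=> q].
  apply: (Rle_trans _ (EX (w1 q) (fun C1 => EX (mu2 q) (fun z => EX (mu2 q) (fun z' =>
     EX (Wn (C1 (s1of u)) z) (fun y => Kp q (C1 (s1of u)) z' y)))))).
    apply: Req_le; apply: EX_ext => C1.
    apply: (EX_marg2 (fun _ => mu2_sum1 q)
      (fun z z' => EX (Wn (C1 (s1of u)) z) (fun y => Kp q (C1 (s1of u)) z' y))).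
    by rewrite eq_sym.
  rewrite (EX_marg1 (fun _ => mu1_sum1 q) (s1of u)
    (fun x => EX (mu2 q) (fun z => EX (mu2 q) (fun z' => EX (Wn x z) (fun y => Kp q x z' y))))).
  apply: EX_le_const; [move=> x; exact: mu1_ge0 | exact: mu1_sum1 | move=> x].
  apply: EX_le_const; [move=> z; exact: mu2_ge0 | exact: mu2_sum1 | move=> z]; rewrite EX_swap.
  apply: EX_le_const; [move=> y; exact: Wn_ge0 | exact: Wn_sum1 | move=> y].
  exact: (Kp2_le1 hk0 hk q x (yv y)).
apply: EX_le_const; [move=> u; exact: pu_ge0 | exact: pu_sum1 | move=> u].
apply: (Rle_trans _ (\sumR_(a2 : Sm2) exp (- ga) * Rho u a2)).
  apply: sumR_le => a2 _; case: ifP => [ne|_].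
    rewrite -[X in _ <= X]Rmult_1_r; apply: Rmult_le_compat_l.
      apply: Rmult_le_pos; [lra | exact: Rho0].
    exact: hB.
  apply: Rmult_le_pos; [lra | exact: Rho0].
rewrite -big_distrr /= -[X in _ <= X]Rmult_1_r; apply: Rmult_le_compat_l; first lra.
exact: (rho_prod2_le1 hr0 hr (s1of u) (wv u)).
Qed.

Lemma AV_markov3 (r : S1 -> S2 -> Wt -> R) (k : Q -> X1 -> X2 -> Yt -> R) :
  (forall a1 a2 w, 0 <= r a1 a2 w) -> (forall q x1 x2 y, 0 <= k q x1 x2 y) ->
  (forall w, \sumR_(a : S1) \sumR_(b : S2) r a b w <= 1) ->
  (forall q y, EX (px1 q) (fun x => EX (px2 q) (fun z => k q x z y)) <= 1) ->
  AV (fun u q C1 C2 y => \sumR_(a1 : Sm1) \sumR_(a2 : Sm2)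
        (if (a1 != s1of u) && (a2 != s2of u)
         then ind (cnd r k q C1 C2 (yv y) (wv u) (a1, a2)) else 0))
  <= exp (- ga).
Proof.
move=> hr0 hk0 hr hk.
pose Rho (u : Um) (a : Sm1 * Sm2) := \prodR_(i : 'I_m) r (a.1 i) (a.2 i) (wv u i).
pose Kp (q : Qn) (x' : Xn1) (z' : Xn2) (y : Yn) := \prodR_(j : 'I_n) k (q j) (x' j) (z' j) (yv y j).
have Rho0 : forall u a, 0 <= Rho u a by move=> u a; apply: prodR_ge0 => i _; exact: hr0.
have Kp0 : forall q x' z' y, 0 <= Kp q x' z' y by move=> *; apply: prodR_ge0 => i _; exact: hk0.
have c0 := exp_pos (- ga).
apply: (Rle_trans _ (AV (fun u q C1 C2 y => \sumR_(a : Sm1 * Sm2)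
   (if (a.1 != s1of u) && (a.2 != s2of u)
    then exp (- ga) * Rho u a * Kp q (C1 a.1) (C2 a.2) y else 0)))).
  apply: AV_le => u q C1 C2 y; rewrite pair_bigA /=; apply: sumR_le => a _; case: ifP => _; last lra.
  rewrite /cnd /=.
  apply: Rle_trans; first apply: ind_markov.
    apply: Rmult_le_pos; [exact: Rho0 | exact: Kp0].
  apply: Req_le; rewrite /Rho /Kp; set A1 := \prodR_(i : _) _; set A2 := \prodR_(j : _) _; ring.
pose B (u : Um) (a : Sm1 * Sm2) := EX wq (fun q => EX (w1 q) (fun C1 => EX (w2 q) (fun C2 =>
   EX (Wn (C1 (s1of u)) (C2 (s2of u))) (fun y => Kp q (C1 a.1) (C2 a.2) y)))).
have eAV : AV (fun u q C1 C2 y => \sumR_(a : Sm1 * Sm2)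
   (if (a.1 != s1of u) && (a.2 != s2of u)
    then exp (- ga) * Rho u a * Kp q (C1 a.1) (C2 a.2) y else 0))
  = EX pu (fun u => \sumR_(a : Sm1 * Sm2) (if (a.1 != s1of u) && (a.2 != s2of u)
       then exp (- ga) * Rho u a * B u a else 0)).
  rewrite /AV; apply: EX_ext => u.
  under EX_ext => q do under EX_ext => C1 do under EX_ext => C2 do rewrite EX_sum.
  under EX_ext => q do under EX_ext => C1 do rewrite EX_sum.
  under EX_ext => q do rewrite EX_sum.
  rewrite EX_sum; apply: eq_bigr => a _.
  case: ifP => _; last first.
    under EX_ext => q do under EX_ext => C1 do under EX_ext => C2 do rewrite EX_zero.
    under EX_ext => q do under EX_ext => C1 do rewrite EX_zero.
    under EX_ext => q do rewrite EX_zero.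
    by rewrite EX_zero.
  under EX_ext => q do under EX_ext => C1 do under EX_ext => C2 do rewrite EX_scal.
  under EX_ext => q do under EX_ext => C1 do rewrite EX_scal.
  under EX_ext => q do rewrite EX_scal.
  by rewrite EX_scal.
rewrite eAV.
have hB : forall u a, a.1 != s1of u -> a.2 != s2of u -> B u a <= 1.
  move=> u [a1 a2] /= ne1 ne2.
  apply: EX_le_const; [move=> q; exact: wq_ge0 | exact: wq_sum1 | move=> q].
  apply: (Rle_trans _ (EX (w1 q) (fun C1 => EX (mu2 q) (fun z => EX (mu2 q) (fun z' =>
     EX (Wn (C1 (s1of u)) z) (fun y => Kp q (C1 a1) z' y)))))).
    apply: Req_le; apply: EX_ext => C1.
    apply: (EX_marg2 (fun _ => mu2_sum1 q)
      (fun z z' => EX (Wn (C1 (s1of u)) z) (fun y => Kp q (C1 a1) z' y))).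
    by rewrite eq_sym.
  rewrite (EX_marg2 (fun _ => mu1_sum1 q)
    (fun x x' => EX (mu2 q) (fun z => EX (mu2 q) (fun z' => EX (Wn x z) (fun y => Kp q x' z' y))))); last by rewrite eq_sym.
  apply: EX_le_const; [move=> x; exact: mu1_ge0 | exact: mu1_sum1 | move=> x].
  rewrite EX_swap.
  apply: EX_le_const; [move=> z; exact: mu2_ge0 | exact: mu2_sum1 | move=> z].
  under EX_ext => x' do rewrite EX_swap.
  rewrite EX_swap.
  apply: EX_le_const; [move=> y; exact: Wn_ge0 | exact: Wn_sum1 | move=> y].
  rewrite /Kp.
  under EX_ext => x' do rewrite (@EX_prod _ _ (fun j => px2 (q j)) (fun j z => k (q j) (x' j) z (yv y j))).
  rewrite (@EX_prod _ _ (fun j => px1 (q j)) (fun j x => EX (px2 (q j)) (fun z => k (q j) x z (yv y j)))).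
  apply: prodR_le1 => j _; split; last exact: hk.
  apply: EX_ge0 => [t|t]; first exact: pmf_ge0.
  apply: EX_ge0 => [t'|t']; [exact: pmf_ge0 | exact: hk0].
apply: EX_le_const; [move=> u; exact: pu_ge0 | exact: pu_sum1 | move=> u].
apply: (Rle_trans _ (\sumR_(a : Sm1 * Sm2) exp (- ga) * Rho u a)).
  apply: sumR_le => a _; case: ifP => [/andP [ne1 ne2]|_].
    rewrite -[X in _ <= X]Rmult_1_r; apply: Rmult_le_compat_l.
      apply: Rmult_le_pos; [lra | exact: Rho0].
    exact: hB.
  apply: Rmult_le_pos; [lra | exact: Rho0].
rewrite -big_distrr /= -[X in _ <= X]Rmult_1_r; apply: Rmult_le_compat_l; first lra.
rewrite /Rho sum_pair /= sum_zip.
rewrite (eq_bigr (fun z : {ffun 'I_m -> S1 * S2} => \prodR_(i : 'I_m) (fun i (ab : S1 * S2) => r ab.1 ab.2 (wv u i)) i (z i))); last first.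
  by move=> z _; apply: eq_bigr => i _; rewrite !ffunE.
rewrite (sum_ffun_prod (fun i (ab : S1 * S2) => r ab.1 ab.2 (wv u i))).
apply: prodR_le1 => i _; split; last by rewrite sum_pair /=; exact: hr.
apply: sumR_ge0 => ab _; exact: hr0.
Qed.

Lemma AV_rec (r1 r2 r3 : S1 -> S2 -> Wt -> R) (k1 k2 k3 : Q -> X1 -> X2 -> Yt -> R) (d : Sm1 * Sm2) :
  (forall a1 a2 w, 0 <= r1 a1 a2 w) -> (forall a1 a2 w, 0 <= r2 a1 a2 w) -> (forall a1 a2 w, 0 <= r3 a1 a2 w) ->
  (forall q x1 x2 y, 0 <= k1 q x1 x2 y) -> (forall q x1 x2 y, 0 <= k2 q x1 x2 y) ->
  (forall q x1 x2 y, 0 <= k3 q x1 x2 y) ->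
  (forall a2 w, \sumR_(a : S1) r1 a a2 w <= 1) ->
  (forall a1 w, \sumR_(a : S2) r2 a1 a w <= 1) ->
  (forall w, \sumR_(a : S1) \sumR_(b : S2) r3 a b w <= 1) ->
  (forall q x2 y, EX (px1 q) (fun x => k1 q x x2 y) <= 1) ->
  (forall q x1 y, EX (px2 q) (fun x => k2 q x1 x y) <= 1) ->
  (forall q y, EX (px1 q) (fun x => EX (px2 q) (fun z => k3 q x z y)) <= 1) ->
  AV (fun u q C1 C2 y => ind (decf (cnd r1 k1 q C1 C2 (yv y) (wv u)) (cnd r2 k2 q C1 C2 (yv y) (wv u))
        (cnd r3 k3 q C1 C2 (yv y) (wv u)) d != (s1of u, s2of u)))
  <= AV (fun u q C1 C2 y => ind (~~ cnd r1 k1 q C1 C2 (yv y) (wv u) (s1of u, s2of u)))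
   + AV (fun u q C1 C2 y => ind (~~ cnd r2 k2 q C1 C2 (yv y) (wv u) (s1of u, s2of u)))
   + AV (fun u q C1 C2 y => ind (~~ cnd r3 k3 q C1 C2 (yv y) (wv u) (s1of u, s2of u)))
   + 3 * exp (- ga).
Proof.
move=> hr10 hr20 hr30 hk10 hk20 hk30 hr1 hr2 hr3 hk1 hk2 hk3.
apply: Rle_trans; first (apply: AV_le => u q C1 C2 y; exact: dec_err2).
rewrite !AV_add.
have h1 := AV_markov1 hr10 hk10 hr1 hk1.
have h2 := AV_markov2 hr20 hk20 hr2 hk2.
have h3 := AV_markov3 hr30 hk30 hr3 hk3.
rewrite !Rplus_assoc; do 3 apply: Rplus_le_compat_l.
apply: (Rle_trans _ (exp (- ga) + (exp (- ga) + exp (- ga)))); last lra.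
apply: Rplus_le_compat; first exact: h1.
apply: Rplus_le_compat; [exact: h2 | exact: h3].
Qed.

Local Notation L := (Q * X1 * X2 * (Y1 * Y2))%type.
Local Notation PJm := (PJ pq px1 px2 W).

Definition r1c (a1 : S1) (a2 : S2) (w : Wt) : R :=
  rho p (fun u : U => u.1.1.1) (fun u : U => (u.1.1.2, sw u)) a1 (a2, w).
Definition r2c (a1 : S1) (a2 : S2) (w : Wt) : R :=
  rho p (fun u : U => u.1.1.2) (fun u : U => (u.1.1.1, sw u)) a2 (a1, w).
Definition r3c (a1 : S1) (a2 : S2) (w : Wt) : R :=
  rho p (fun u : U => (u.1.1.1, u.1.1.2)) sw (a1, a2) w.
Definition k1c (q : Q) (x1 : X1) (x2 : X2) (y : Yt) : R :=
  kap PJm (fun t : L => t.1.1.2) (fun t : L => (t.1.2, t.1.1.1)) (fun t : L => yp t.2) x1 (x2, q) y.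
Definition k2c (q : Q) (x1 : X1) (x2 : X2) (y : Yt) : R :=
  kap PJm (fun t : L => t.1.2) (fun t : L => (t.1.1.2, t.1.1.1)) (fun t : L => yp t.2) x2 (x1, q) y.
Definition k3c (q : Q) (x1 : X1) (x2 : X2) (y : Yt) : R :=
  kap PJm (fun t : L => (t.1.1.2, t.1.2)) (fun t : L => t.1.1.1) (fun t : L => yp t.2) (x1, x2) q y.

Lemma p0 : forall t, 0 <= p t. Proof. exact: pmf_ge0. Qed.
Lemma PJ0 : forall t, 0 <= PJm t. Proof. exact: PJ_ge0. Qed.

Lemma r1c_ge0 a1 a2 w : 0 <= r1c a1 a2 w. Proof. exact: (rho_ge0 p0). Qed.
Lemma r2c_ge0 a1 a2 w : 0 <= r2c a1 a2 w. Proof. exact: (rho_ge0 p0). Qed.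
Lemma r3c_ge0 a1 a2 w : 0 <= r3c a1 a2 w. Proof. exact: (rho_ge0 p0). Qed.
Lemma k1c_ge0 q x1 x2 y : 0 <= k1c q x1 x2 y. Proof. exact: (kap_ge0 PJ0). Qed.
Lemma k2c_ge0 q x1 x2 y : 0 <= k2c q x1 x2 y. Proof. exact: (kap_ge0 PJ0). Qed.
Lemma k3c_ge0 q x1 x2 y : 0 <= k3c q x1 x2 y. Proof. exact: (kap_ge0 PJ0). Qed.

Lemma r1c_sum a2 w : \sumR_(a : S1) r1c a a2 w <= 1.
Proof. exact: (rho_sum_le1 p (fun u : U => u.1.1.1) (fun u : U => (u.1.1.2, sw u)) (a2, w)). Qed.
Lemma r2c_sum a1 w : \sumR_(a : S2) r2c a1 a w <= 1.
Proof. exact: (rho_sum_le1 p (fun u : U => u.1.1.2) (fun u : U => (u.1.1.1, sw u)) (a1, w)). Qed.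
Lemma r3c_sum w : \sumR_(a : S1) \sumR_(b : S2) r3c a b w <= 1.
Proof.
have := rho_sum_le1 p (fun u : U => (u.1.1.1, u.1.1.2)) sw w.
by rewrite sum_pair.
Qed.

Lemma k1c_sum q x2 y : EX (px1 q) (fun x => k1c q x x2 y) <= 1.
Proof.
apply: (kap_sum_le1 PJ0) => [a|a]; first exact: pmf_ge0.
rewrite (margPJ_X1X2Q pq px1 px2 HW) (margPJ_X2Q pq px2 Hpx1 HW); ring.
Qed.

Lemma k2c_sum q x1 y : EX (px2 q) (fun x => k2c q x1 x y) <= 1.
Proof.
apply: (kap_sum_le1 PJ0) => [a|a]; first exact: pmf_ge0.
rewrite (margPJ_X2X1Q pq px1 px2 HW) (margPJ_X1Q pq px1 Hpx2 HW); ring.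
Qed.

Lemma k3c_sum q y : EX (px1 q) (fun x => EX (px2 q) (fun z => k3c q x z y)) <= 1.
Proof.
have := kap_sum_le1 PJ0 (fA := fun t : L => (t.1.1.2, t.1.2)) (fB := fun t : L => t.1.1.1)
  (fun t : L => yp t.2) (mu := fun a : X1 * X2 => px1 q a.1 * px2 q a.2) (b := q) y.
rewrite sum_pair /=.
have e : forall ab : X1 * X2, marg PJm (fun t : L => ((t.1.1.2, t.1.2), t.1.1.1)) (ab, q) =
    px1 q ab.1 * px2 q ab.2 * marg PJm (fun t : L => t.1.1.1) q.
  by move=> [a b]; rewrite (margPJ_X12Q pq px1 px2 HW) (margPJ_Q pq Hpx1 Hpx2 HW) /=; ring.
move=> /(_ _ e) h.
apply: Rle_trans _ (h _); last first.
  by move=> [a b]; apply: Rmult_le_pos; apply: pmf_ge0.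
apply: Req_le; rewrite /EX; apply: eq_bigr => a _; rewrite big_distrr; apply: eq_bigr => b _ /=.
rewrite /k3c; ring.
Qed.

Definition rr1 (t : U) : R := r1c t.1.1.1 t.1.1.2 (sw t).
Definition rr2 (t : U) : R := r2c t.1.1.1 t.1.1.2 (sw t).
Definition rr3 (t : U) : R := r3c t.1.1.1 t.1.1.2 (sw t).
Definition kk1 (l : L) : R := k1c l.1.1.1 l.1.1.2 l.1.2 (yp l.2).
Definition kk2 (l : L) : R := k2c l.1.1.1 l.1.1.2 l.1.2 (yp l.2).
Definition kk3 (l : L) : R := k3c l.1.1.1 l.1.1.2 l.1.2 (yp l.2).

Lemma rr1_pos t : 0 < p t -> 0 < rr1 t.
Proof. move=> h; exact: (rho_gt0 p0 (fun u : U => u.1.1.1) (fun u : U => (u.1.1.2, sw u)) h). Qed.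
Lemma rr2_pos t : 0 < p t -> 0 < rr2 t.
Proof. move=> h; exact: (rho_gt0 p0 (fun u : U => u.1.1.2) (fun u : U => (u.1.1.1, sw u)) h). Qed.
Lemma rr3_pos t : 0 < p t -> 0 < rr3 t.
Proof. move=> h; exact: (rho_gt0 p0 (fun u : U => (u.1.1.1, u.1.1.2)) sw h). Qed.
Lemma kk1_pos l : 0 < PJm l -> 0 < kk1 l.
Proof.
move=> h; exact: (kap_gt0 PJ0 (fun t : L => t.1.1.2) (fun t : L => (t.1.2, t.1.1.1)) (fun t : L => yp t.2) h).
Qed.
Lemma kk2_pos l : 0 < PJm l -> 0 < kk2 l.
Proof.
move=> h; exact: (kap_gt0 PJ0 (fun t : L => t.1.2) (fun t : L => (t.1.1.2, t.1.1.1)) (fun t : L => yp t.2) h).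
Qed.
Lemma kk3_pos l : 0 < PJm l -> 0 < kk3 l.
Proof.
move=> h; exact: (kap_gt0 PJ0 (fun t : L => (t.1.1.2, t.1.2)) (fun t : L => t.1.1.1) (fun t : L => yp t.2) h).
Qed.

Definition TB (rr : U -> R) (kk : L -> R) : R :=
  2 * (INR m * VZ p rr + INR n * VV PJm kk) /
  ((INR m * EZ p rr + INR n * EV PJm kk - ga) * (INR m * EZ p rr + INR n * EV PJm kk - ga)).

Lemma rec_bound d :
  ga < INR m * EZ p rr1 + INR n * EV PJm kk1 ->
  ga < INR m * EZ p rr2 + INR n * EV PJm kk2 ->
  ga < INR m * EZ p rr3 + INR n * EV PJm kk3 ->
  AV (fun u q C1 C2 y => ind (decf (cnd r1c k1c q C1 C2 (yv y) (wv u)) (cnd r2c k2c q C1 C2 (yv y) (wv u))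
        (cnd r3c k3c q C1 C2 (yv y) (wv u)) d != (s1of u, s2of u)))
  <= TB rr1 kk1 + TB rr2 kk2 + TB rr3 kk3 + 3 * exp (- ga).
Proof.
move=> h1 h2 h3.
apply: Rle_trans; first apply: (AV_rec d r1c_ge0 r2c_ge0 r3c_ge0 k1c_ge0 k2c_ge0 k3c_ge0
   r1c_sum r2c_sum r3c_sum k1c_sum k2c_sum k3c_sum).
have t1 := AV_tail (r := r1c) (k := k1c) rr1_pos kk1_pos h1.
have t2 := AV_tail (r := r2c) (k := k2c) rr2_pos kk2_pos h2.
have t3 := AV_tail (r := r3c) (k := k3c) rr3_pos kk3_pos h3.
apply: Rplus_le_compat_r; apply: Rplus_le_compat; first apply: Rplus_le_compat.
- exact: t1.
- exact: t2.
- exact: t3.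
Qed.

End Code.

Lemma sumR_minus (T : finType) (F G : T -> R) :
  \sumR_(t : T) (F t - G t) = \sumR_(t : T) F t - \sumR_(t : T) G t.
Proof.
rewrite /Rminus big_split /=; congr (_ + _).
rewrite (big_endo Ropp) //; [move=> x y; ring | ring].
Qed.

Lemma EZ_rho (T A B : finType) (p : T -> R) (fA : T -> A) (fB : T -> B) :
  EZ p (fun t => rho p fA fB (fA t) (fB t)) = - cond_entropy p fA fB.
Proof. by rewrite /EZ /cond_entropy rsumE Ropp_involutive. Qed.

Lemma EV_kap (L TA TB TY : finType) (P : L -> R) (P0 : forall t, 0 <= P t)
  (fA : L -> TA) (fB : L -> TB) (fY : L -> TY) :
  EV P (fun t => kap P fA fB fY (fA t) (fB t) (fY t)) = cond_mutinf P fA fY fB.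
Proof.
rewrite /EV /cond_mutinf /cond_entropy !rsumE.
transitivity (\sumR_(t : L) (P t * ln (rho P fY (fun t => (fA t, fB t)) (fY t) (fA t, fB t))
   - P t * ln (rho P fY fB (fY t) (fB t)))).
  apply: eq_bigr => t _.
  case: (Req_dec (P t) 0) => [->|h]; first ring.
  have hp : 0 < P t by have := P0 t; lra.
  rewrite (ln_kap P0 fA fB fY hp); ring.
rewrite sumR_minus; rewrite /rho; ring.
Qed.

Lemma ind_and (a b : bool) : ind (~~ (a && b)) <= ind (~~ a) + ind (~~ b).
Proof. rewrite /ind; case: a; case: b => /=; lra. Qed.

Section Final.
Variables (S1 S2 W1 W2 X1 X2 Y1 Y2 Q : finType).
Variables (p : src S1 S2 W1 W2 -> R) (W : X1 -> X2 -> (Y1 * Y2)%type -> R)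
  (pq : Q -> R) (px1 : Q -> X1 -> R) (px2 : Q -> X2 -> R).
Hypotheses (Hp : is_pmf p) (HW : forall x1 x2, is_pmf (W x1 x2)) (Hpq : is_pmf pq)
  (Hpx1 : forall q, is_pmf (px1 q)) (Hpx2 : forall q, is_pmf (px2 q)).
Variables (m n : nat) (ga : R).

Local Notation U := (src S1 S2 W1 W2).
Local Notation Sm1 := {ffun 'I_m -> S1}.
Local Notation Sm2 := {ffun 'I_m -> S2}.
Local Notation Xn1 := {ffun 'I_n -> X1}.
Local Notation Xn2 := {ffun 'I_n -> X2}.
Local Notation CB1 := {ffun Sm1 -> Xn1}.
Local Notation CB2 := {ffun Sm2 -> Xn2}.
Local Notation Qn := {ffun 'I_n -> Q}.
Local Notation wq := (pw (fun _ : 'I_n => pq)).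
Local Notation mu1 q := (pw (fun j : 'I_n => px1 (q j))).
Local Notation mu2 q := (pw (fun j : 'I_n => px2 (q j))).
Local Notation w1 q := (pw (fun _ : Sm1 => mu1 q)).
Local Notation w2 q := (pw (fun _ : Sm2 => mu2 q)).

Definition sw1 (u : U) : W1 := u.1.2.
Definition sw2 (u : U) : W2 := u.2.
Definition yp1 (y : (Y1 * Y2)%type) : Y1 := y.1.
Definition yp2 (y : (Y1 * Y2)%type) : Y2 := y.2.

Definition dec1 (d : Sm1 * Sm2) (q : Qn) (C1 : CB1) (C2 : CB2)
  (yy : {ffun 'I_n -> Y1}) (ww : {ffun 'I_m -> W1}) : Sm1 * Sm2 :=
  decf (cnd ga (r1c p sw1) (k1c W pq px1 px2 yp1) q C1 C2 yy ww)
       (cnd ga (r2c p sw1) (k2c W pq px1 px2 yp1) q C1 C2 yy ww)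
       (cnd ga (r3c p sw1) (k3c W pq px1 px2 yp1) q C1 C2 yy ww) d.
Definition dec2 (d : Sm1 * Sm2) (q : Qn) (C1 : CB1) (C2 : CB2)
  (yy : {ffun 'I_n -> Y2}) (ww : {ffun 'I_m -> W2}) : Sm1 * Sm2 :=
  decf (cnd ga (r1c p sw2) (k1c W pq px1 px2 yp2) q C1 C2 yy ww)
       (cnd ga (r2c p sw2) (k2c W pq px1 px2 yp2) q C1 C2 yy ww)
       (cnd ga (r3c p sw2) (k3c W pq px1 px2 yp2) q C1 C2 yy ww) d.

Local Notation PJm := (PJ pq px1 px2 W).
Local Notation Mv rr kk := (INR m * EZ p rr + INR n * EV PJm kk).

Lemma total_bound d :
  ga < Mv (rr1 p sw1) (kk1 W pq px1 px2 yp1) ->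
  ga < Mv (rr2 p sw1) (kk2 W pq px1 px2 yp1) ->
  ga < Mv (rr3 p sw1) (kk3 W pq px1 px2 yp1) ->
  ga < Mv (rr1 p sw2) (kk1 W pq px1 px2 yp2) ->
  ga < Mv (rr2 p sw2) (kk2 W pq px1 px2 yp2) ->
  ga < Mv (rr3 p sw2) (kk3 W pq px1 px2 yp2) ->
  EX wq (fun q => EX (w1 q) (fun C1 => EX (w2 q) (fun C2 =>
    err_prob p W (fun s => C1 s) (fun s => C2 s) (dec1 d q C1 C2) (dec2 d q C1 C2))))
  <= (TB p W pq px1 px2 m n ga (rr1 p sw1) (kk1 W pq px1 px2 yp1)
    + TB p W pq px1 px2 m n ga (rr2 p sw1) (kk2 W pq px1 px2 yp1)
    + TB p W pq px1 px2 m n ga (rr3 p sw1) (kk3 W pq px1 px2 yp1) + 3 * exp (- ga))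
   + (TB p W pq px1 px2 m n ga (rr1 p sw2) (kk1 W pq px1 px2 yp2)
    + TB p W pq px1 px2 m n ga (rr2 p sw2) (kk2 W pq px1 px2 yp2)
    + TB p W pq px1 px2 m n ga (rr3 p sw2) (kk3 W pq px1 px2 yp2) + 3 * exp (- ga)).
Proof.
move=> h1 h2 h3 h4 h5 h6.
under EX_ext => q do under EX_ext => C1 do under EX_ext => C2 do rewrite errE.
rewrite avg_swap.
have b1 := rec_bound Hp HW Hpq Hpx1 Hpx2 (m := m) (n := n) (sw := sw1) (yp := yp1) d h1 h2 h3.
have b2 := rec_bound Hp HW Hpq Hpx1 Hpx2 (m := m) (n := n) (sw := sw2) (yp := yp2) d h4 h5 h6.
have := Rplus_le_compat _ _ _ _ b1 b2.
rewrite -AV_add.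
apply: Rle_trans.
apply: (AV_le Hp HW Hpq Hpx1 Hpx2) => u q C1 C2 y.
exact: ind_and.
Qed.
End Final.

Lemma VZ_ge0 (T : finType) (p rr : T -> R) : (forall t, 0 <= p t) -> 0 <= VZ p rr.
Proof. move=> h; apply: sumR_ge0 => t _; apply: Rmult_le_pos => //; exact: Rle_0_sqr. Qed.
Lemma VV_ge0 (T : finType) (p rr : T -> R) : (forall t, 0 <= p t) -> 0 <= VV p rr.
Proof. move=> h; apply: sumR_ge0 => t _; apply: Rmult_le_pos => //; exact: Rle_0_sqr. Qed.

Lemma num_one (mm nn b th ez ev vz vv ga : R) :
  0 < mm -> nn = b * mm -> 0 < b -> 0 <= vz -> 0 <= vv -> 0 < th ->
  2 * th <= b * ev + ez -> ga = mm * th ->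
  ga < mm * ez + nn * ev /\
  2 * (mm * vz + nn * vv) / ((mm * ez + nn * ev - ga) * (mm * ez + nn * ev - ga))
    <= 2 * (vz + b * vv) / (th * th) / mm.
Proof.
move=> hm hn hb hvz hvv hth hgap hga; subst nn ga.
have hD : mm * th <= mm * ez + b * mm * ev - mm * th.
  have : mm * (2 * th) <= mm * (b * ev + ez) by apply: Rmult_le_compat_l; lra.
  nra.
have hmt : 0 < mm * th by nra.
split; first nra.
set D := mm * ez + b * mm * ev - mm * th in hD *.
have hDD : (mm * th) * (mm * th) <= D * D by apply: Rmult_le_compat; lra.
have hnum : 0 <= 2 * (mm * vz + b * mm * vv).
  have := Rmult_le_pos _ _ (Rlt_le _ _ hm) hvz.
  have := Rmult_le_pos _ _ (Rlt_le _ _ (Rmult_lt_0_compat _ _ hb hm)) hvv.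
  lra.
apply: (Rle_trans _ (2 * (mm * vz + b * mm * vv) / ((mm * th) * (mm * th)))).
  rewrite /Rdiv; apply: Rmult_le_compat_l => //.
  apply: Rinv_le_contravar => //; nra.
apply: Req_le; field; lra.
Qed.

Lemma exp_bound x : 0 < x -> exp (- x) <= / x.
Proof.
move=> hx; rewrite exp_Ropp.
have h := exp_ineq1 x (Rgt_not_eq _ _ hx).
apply: Rinv_le_contravar; lra.
Qed.

Unset Implicit Arguments.

Theorem theorem5 (S1 S2 W1 W2 X1 X2 Y1 Y2 : finType)
    (p : src S1 S2 W1 W2 -> R) (W : X1 -> X2 -> (Y1 * Y2)%type -> R) (b : R)
    (Hb : exists m0 n0 : nat, (0 < m0)%nat /\ (0 < n0)%nat /\ INR n0 / INR m0 = b)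
    (Hp : is_pmf p) (HW : forall x1 x2, is_pmf (W x1 x2))
    (Q : finType) (HQ : is_true (leq #|Q| 4))
    (pq : Q -> R) (px1 : Q -> X1 -> R) (px2 : Q -> X2 -> R)
    (Hpq : is_pmf pq) (Hpx1 : forall q, is_pmf (px1 q)) (Hpx2 : forall q, is_pmf (px2 q)) :
  let P := in_joint pq px1 px2 W in
  let vQ := fun t : (Q * X1 * X2 * (Y1 * Y2))%type => t.1.1.1 in
  let vX1 := fun t : (Q * X1 * X2 * (Y1 * Y2))%type => t.1.1.2 in
  let vX2 := fun t : (Q * X1 * X2 * (Y1 * Y2))%type => t.1.2 in
  let vY1 := fun t : (Q * X1 * X2 * (Y1 * Y2))%type => t.2.1 in
  let vY2 := fun t : (Q * X1 * X2 * (Y1 * Y2))%type => t.2.2 in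
  let sS1 := fun u : src S1 S2 W1 W2 => u.1.1.1 in
  let sS2 := fun u : src S1 S2 W1 W2 => u.1.1.2 in
  let sW1 := fun u : src S1 S2 W1 W2 => u.1.2 in
  let sW2 := fun u : src S1 S2 W1 W2 => u.2 in
  (* receiver 1 *)
  cond_entropy p sS1 (fun u => (sS2 u, sW1 u))
    < b * cond_mutinf P vX1 vY1 (fun t => (vX2 t, vQ t)) ->
  cond_entropy p sS2 (fun u => (sS1 u, sW1 u))
    < b * cond_mutinf P vX2 vY1 (fun t => (vX1 t, vQ t)) ->
  cond_entropy p (fun u => (sS1 u, sS2 u)) sW1
    < b * cond_mutinf P (fun t => (vX1 t, vX2 t)) vY1 vQ ->
  (* receiver 2 *)
  cond_entropy p sS1 (fun u => (sS2 u, sW2 u))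
    < b * cond_mutinf P vX1 vY2 (fun t => (vX2 t, vQ t)) ->
  cond_entropy p sS2 (fun u => (sS1 u, sW2 u))
    < b * cond_mutinf P vX2 vY2 (fun t => (vX1 t, vQ t)) ->
  cond_entropy p (fun u => (sS1 u, sS2 u)) sW2
    < b * cond_mutinf P (fun t => (vX1 t, vX2 t)) vY2 vQ ->
  achievable p W b.
Proof.
move=> P vQ vX1 vX2 vY1 vY2 sS1 sS2 sW1 sW2 H1 H2 H3 H4 H5 H6.
case: Hb => m0 [n0 [hm0 [hn0 hb]]].
have [s0 _] : exists s0 : src S1 S2 W1 W2, True.
  case: (pickP (fun _ : src S1 S2 W1 W2 => true)) => [x _|h]; first by exists x.
  exfalso; have := pmf_sum1 Hp; rewrite big1 => [|i _]; first lra.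
  by move: (h i).
have p0 : forall t, 0 <= p t by exact: pmf_ge0.
have PJ0 := PJ_ge0 Hpq Hpx1 Hpx2 HW.
have eZ11 : EZ p (rr1 p (@sw1 S1 S2 W1 W2)) = - cond_entropy p sS1 (fun u => (sS2 u, sW1 u))
  by exact: (EZ_rho p (fun u => u.1.1.1) (fun u => (u.1.1.2, (@sw1 S1 S2 W1 W2) u))).
have eZ21 : EZ p (rr2 p (@sw1 S1 S2 W1 W2)) = - cond_entropy p sS2 (fun u => (sS1 u, sW1 u))
  by exact: (EZ_rho p (fun u => u.1.1.2) (fun u => (u.1.1.1, (@sw1 S1 S2 W1 W2) u))).
have eZ31 : EZ p (rr3 p (@sw1 S1 S2 W1 W2)) = - cond_entropy p (fun u => (sS1 u, sS2 u)) sW1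
  by exact: (EZ_rho p (fun u => (u.1.1.1, u.1.1.2)) (@sw1 S1 S2 W1 W2)).
have eZ12 : EZ p (rr1 p (@sw2 S1 S2 W1 W2)) = - cond_entropy p sS1 (fun u => (sS2 u, sW2 u))
  by exact: (EZ_rho p (fun u => u.1.1.1) (fun u => (u.1.1.2, (@sw2 S1 S2 W1 W2) u))).
have eZ22 : EZ p (rr2 p (@sw2 S1 S2 W1 W2)) = - cond_entropy p sS2 (fun u => (sS1 u, sW2 u))
  by exact: (EZ_rho p (fun u => u.1.1.2) (fun u => (u.1.1.1, (@sw2 S1 S2 W1 W2) u))).
have eZ32 : EZ p (rr3 p (@sw2 S1 S2 W1 W2)) = - cond_entropy p (fun u => (sS1 u, sS2 u)) sW2
  by exact: (EZ_rho p (fun u => (u.1.1.1, u.1.1.2)) (@sw2 S1 S2 W1 W2)).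
have eV11 : EV (PJ pq px1 px2 W) (kk1 W pq px1 px2 (@yp1 Y1 Y2)) = cond_mutinf P vX1 vY1 (fun t => (vX2 t, vQ t))
  by exact: (EV_kap PJ0 (fun t => t.1.1.2) (fun t => (t.1.2, t.1.1.1)) (fun t => (@yp1 Y1 Y2) t.2)).
have eV21 : EV (PJ pq px1 px2 W) (kk2 W pq px1 px2 (@yp1 Y1 Y2)) = cond_mutinf P vX2 vY1 (fun t => (vX1 t, vQ t))
  by exact: (EV_kap PJ0 (fun t => t.1.2) (fun t => (t.1.1.2, t.1.1.1)) (fun t => (@yp1 Y1 Y2) t.2)).
have eV31 : EV (PJ pq px1 px2 W) (kk3 W pq px1 px2 (@yp1 Y1 Y2)) = cond_mutinf P (fun t => (vX1 t, vX2 t)) vY1 vQ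
  by exact: (EV_kap PJ0 (fun t => (t.1.1.2, t.1.2)) (fun t => t.1.1.1) (fun t => (@yp1 Y1 Y2) t.2)).
have eV12 : EV (PJ pq px1 px2 W) (kk1 W pq px1 px2 (@yp2 Y1 Y2)) = cond_mutinf P vX1 vY2 (fun t => (vX2 t, vQ t))
  by exact: (EV_kap PJ0 (fun t => t.1.1.2) (fun t => (t.1.2, t.1.1.1)) (fun t => (@yp2 Y1 Y2) t.2)).
have eV22 : EV (PJ pq px1 px2 W) (kk2 W pq px1 px2 (@yp2 Y1 Y2)) = cond_mutinf P vX2 vY2 (fun t => (vX1 t, vQ t))
  by exact: (EV_kap PJ0 (fun t => t.1.2) (fun t => (t.1.1.2, t.1.1.1)) (fun t => (@yp2 Y1 Y2) t.2)).
have eV32 : EV (PJ pq px1 px2 W) (kk3 W pq px1 px2 (@yp2 Y1 Y2)) = cond_mutinf P (fun t => (vX1 t, vX2 t)) vY2 vQ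
  by exact: (EV_kap PJ0 (fun t => (t.1.1.2, t.1.2)) (fun t => t.1.1.1) (fun t => (@yp2 Y1 Y2) t.2)).
set sw1' := (@sw1 S1 S2 W1 W2) in eZ11 eZ21 eZ31 *.
set sw2' := (@sw2 S1 S2 W1 W2) in eZ12 eZ22 eZ32 *.
set yp1' := (@yp1 Y1 Y2) in eV11 eV21 eV31 *.
set yp2' := (@yp2 Y1 Y2) in eV12 eV22 eV32 *.
set PJm := PJ pq px1 px2 W in PJ0 eV11 eV21 eV31 eV12 eV22 eV32 *.
set EZ11 := EZ p (rr1 p sw1') in eZ11 *.
set EZ21 := EZ p (rr2 p sw1') in eZ21 *.
set EZ31 := EZ p (rr3 p sw1') in eZ31 *.
set EZ12 := EZ p (rr1 p sw2') in eZ12 *.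
set EZ22 := EZ p (rr2 p sw2') in eZ22 *.
set EZ32 := EZ p (rr3 p sw2') in eZ32 *.
set EV11 := EV PJm (kk1 W pq px1 px2 yp1') in eV11 *.
set EV21 := EV PJm (kk2 W pq px1 px2 yp1') in eV21 *.
set EV31 := EV PJm (kk3 W pq px1 px2 yp1') in eV31 *.
set EV12 := EV PJm (kk1 W pq px1 px2 yp2') in eV12 *.
set EV22 := EV PJm (kk2 W pq px1 px2 yp2') in eV22 *.
set EV32 := EV PJm (kk3 W pq px1 px2 yp2') in eV32 *.
have g11 : 0 < b * EV11 + EZ11 by rewrite eZ11 eV11; lra.
have g21 : 0 < b * EV21 + EZ21 by rewrite eZ21 eV21; lra.
have g31 : 0 < b * EV31 + EZ31 by rewrite eZ31 eV31; lra.
have g12 : 0 < b * EV12 + EZ12 by rewrite eZ12 eV12; lra.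
have g22 : 0 < b * EV22 + EZ22 by rewrite eZ22 eV22; lra.
have g32 : 0 < b * EV32 + EZ32 by rewrite eZ32 eV32; lra.
clear eZ11 eZ21 eZ31 eZ12 eZ22 eZ32 eV11 eV21 eV31 eV12 eV22 eV32 H1 H2 H3 H4 H5 H6.
pose gmin := Rmin (b * EV11 + EZ11) (Rmin (b * EV21 + EZ21) (Rmin (b * EV31 + EZ31)
   (Rmin (b * EV12 + EZ12) (Rmin (b * EV22 + EZ22) (b * EV32 + EZ32))))).
have gpos : 0 < gmin by rewrite /gmin; repeat apply: Rmin_pos => //.
have gl1 : gmin <= b * EV11 + EZ11 by exact: Rmin_l.
have gl2 : gmin <= b * EV21 + EZ21 by apply: Rle_trans (Rmin_r _ _) _; exact: Rmin_l.
have gl3 : gmin <= b * EV31 + EZ31.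
  by apply: Rle_trans (Rmin_r _ _) _; apply: Rle_trans (Rmin_r _ _) _; exact: Rmin_l.
have gl4 : gmin <= b * EV12 + EZ12.
  by do 3 (apply: Rle_trans (Rmin_r _ _) _); exact: Rmin_l.
have gl5 : gmin <= b * EV22 + EZ22.
  by do 4 (apply: Rle_trans (Rmin_r _ _) _); exact: Rmin_l.
have gl6 : gmin <= b * EV32 + EZ32.
  by do 5 (apply: Rle_trans (Rmin_r _ _) _); exact: Rle_refl.
clearbody gmin.
pose th := gmin / 2.
have hth : 0 < th by rewrite /th; lra.
have hm0R : 0 < INR m0 by apply: lt_0_INR; apply/ltP.
have hn0R : 0 < INR n0 by apply: lt_0_INR; apply/ltP.
have hb0 : 0 < b by rewrite -hb; apply: Rdiv_lt_0_compat.
pose cst (rr : src S1 S2 W1 W2 -> R) (kk : Q * X1 * X2 * (Y1 * Y2) -> R) :=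
  2 * (VZ p rr + b * VV PJm kk) / (th * th).
pose K := cst (rr1 p sw1') (kk1 W pq px1 px2 yp1') + cst (rr2 p sw1') (kk2 W pq px1 px2 yp1')
  + cst (rr3 p sw1') (kk3 W pq px1 px2 yp1') + cst (rr1 p sw2') (kk1 W pq px1 px2 yp2')
  + cst (rr2 p sw2') (kk2 W pq px1 px2 yp2') + cst (rr3 p sw2') (kk3 W pq px1 px2 yp2') + 6 / th.
move=> eps heps.
have [k hk] := INR_unbounded (K / eps).
exists (k.+1 * m0)%nat, (k.+1 * n0)%nat.
have em : INR (k.+1 * m0) = INR k.+1 * INR m0 by exact: mult_INR.
have en : INR (k.+1 * n0) = INR k.+1 * INR n0 by exact: mult_INR.
have hk1 : 0 < INR k.+1 by apply: lt_0_INR; lia.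
split; first by rewrite muln_gt0 hm0.
split; first by rewrite muln_gt0 hn0.
split.
  rewrite em en -hb; field; lra.
set m := (k.+1 * m0)%nat in em *.
set n := (k.+1 * n0)%nat in en *.
have hmm : 0 < INR m by rewrite em; nra.
have hnb : INR n = b * INR m.
  rewrite em en -hb; field; lra.
pose ga := INR m * th.
have hga : ga = INR m * th by [].
have hm0ge1 : 1 <= INR m0.
  have : (1 <= m0)%coq_nat by apply/leP.
  move=> /le_INR; rewrite /=; lra.
have hmk : INR k < INR m.
  rewrite em S_INR; have := pos_INR k; nra.
have [M11 T11] := num_one hmm hnb hb0 (VZ_ge0 (rr1 p sw1') p0) (VV_ge0 (kk1 W pq px1 px2 yp1') PJ0) hth
  (ltac:(rewrite /th; lra) : 2 * th <= b * EV11 + EZ11) hga.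
have [M21 T21] := num_one hmm hnb hb0 (VZ_ge0 (rr2 p sw1') p0) (VV_ge0 (kk2 W pq px1 px2 yp1') PJ0) hth
  (ltac:(rewrite /th; lra) : 2 * th <= b * EV21 + EZ21) hga.
have [M31 T31] := num_one hmm hnb hb0 (VZ_ge0 (rr3 p sw1') p0) (VV_ge0 (kk3 W pq px1 px2 yp1') PJ0) hth
  (ltac:(rewrite /th; lra) : 2 * th <= b * EV31 + EZ31) hga.
have [M12 T12] := num_one hmm hnb hb0 (VZ_ge0 (rr1 p sw2') p0) (VV_ge0 (kk1 W pq px1 px2 yp2') PJ0) hth
  (ltac:(rewrite /th; lra) : 2 * th <= b * EV12 + EZ12) hga.
have [M22 T22] := num_one hmm hnb hb0 (VZ_ge0 (rr2 p sw2') p0) (VV_ge0 (kk2 W pq px1 px2 yp2') PJ0) hth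
  (ltac:(rewrite /th; lra) : 2 * th <= b * EV22 + EZ22) hga.
have [M32 T32] := num_one hmm hnb hb0 (VZ_ge0 (rr3 p sw2') p0) (VV_ge0 (kk3 W pq px1 px2 yp2') PJ0) hth
  (ltac:(rewrite /th; lra) : 2 * th <= b * EV32 + EZ32) hga.
pose d := ([ffun _ : 'I_m => s0.1.1.1], [ffun _ : 'I_m => s0.1.1.2]).
have tb := total_bound Hp HW Hpq Hpx1 Hpx2 d M11 M21 M31 M12 M22 M32.
have hexp : exp (- ga) <= / (INR m * th) by apply: exp_bound; nra.
have hK : K / INR m < eps.
  have : K / eps < INR m by lra.
  move=> h; apply: (Rmult_lt_reg_r (INR m)) => //.
  rewrite /Rdiv Rmult_assoc Rinv_l; last lra.
  rewrite Rmult_1_r.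
  have := Rmult_lt_compat_l eps _ _ heps h.
  rewrite /Rdiv Rmult_comm Rmult_assoc Rinv_l; lra.
have htot : EX (pw (fun _ : 'I_n => pq)) (fun q => EX (pw (fun _ : {ffun 'I_m -> S1} => pw (fun j : 'I_n => px1 (q j))))
   (fun C1 => EX (pw (fun _ : {ffun 'I_m -> S2} => pw (fun j : 'I_n => px2 (q j)))) (fun C2 =>
    err_prob p W (fun s => C1 s) (fun s => C2 s) (dec1 p W pq px1 px2 ga d q C1 C2)
      (dec2 p W pq px1 px2 ga d q C1 C2)))) < eps.
  apply: Rle_lt_trans tb _.
  apply: Rle_lt_trans hK.
  have e6 : K / INR m = cst (rr1 p sw1') (kk1 W pq px1 px2 yp1') / INR m
    + cst (rr2 p sw1') (kk2 W pq px1 px2 yp1') / INR m + cst (rr3 p sw1') (kk3 W pq px1 px2 yp1') / INR m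
    + cst (rr1 p sw2') (kk1 W pq px1 px2 yp2') / INR m + cst (rr2 p sw2') (kk2 W pq px1 px2 yp2') / INR m
    + cst (rr3 p sw2') (kk3 W pq px1 px2 yp2') / INR m + 6 * / (INR m * th).
    rewrite /K /Rdiv; field; lra.
  rewrite e6.
  rewrite /TB /cst.
  rewrite /cst in T11 T21 T31 T12 T22 T32.
  subst EZ11 EZ21 EZ31 EZ12 EZ22 EZ32 EV11 EV21 EV31 EV12 EV22 EV32 PJm sw1' sw2' yp1' yp2'.
  lra.
have [q [C1 [C2 hq]]] := exists_code Hpq Hpx1 Hpx2 htot.
by exists (fun s => C1 s), (fun s => C2 s), (dec1 p W pq px1 px2 ga d q C1 C2), (dec2 p W pq px1 px2 ga d q C1 C2).
Qed.
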